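(* Every convex polyiamond can be domed.
   Context: All equilateral triangles have unit edge length. A polyiamond is a polygon that is a union of unit equilateral triangles glued edge to edge. A convex polygon $P$ can be domed if there is a convex polyhedron that has $P$ as one face and all of whose other faces are convex polyiamonds. *)

(* Defs.v *)
From Stdlib Require Import Reals List ZArith.
Open Scope R_scope.

Record V3 := mkV { vx : R; vy : R; vz : R }.

Definition vadd (a b : V3) : V3 := mkV (vx a + vx b) (vy a + vy b) (vz a + vz b).
Definition vsub (a b : V3) : V3 := mkV (vx a - vx b) (vy a - vy b) (vz a - vz b).
Definition vscale (t : R) (a : V3) : V3 := mkV (t * vx a) (t * vy a) (t * vz a).
Definition vzero : V3 := mkV 0 0 0.
Definition dot (a b : V3) : R := vx a * vx b + vy a * vy b + vz a * vz b.
Definition cross (a b : V3) : V3 :=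
  mkV (vy a * vz b - vz a * vy b) (vz a * vx b - vx a * vz b) (vx a * vy b - vy a * vx b).
Definition det3 (a b c : V3) : R := dot a (cross b c).

Definition region := V3 -> Prop.
Definition same_region (A B : region) : Prop := forall x, A x <-> B x.

(* Linear combination sum_i w_i p_i (lists truncated to common length). *)
Fixpoint lincomb (w : list R) (l : list V3) : V3 :=
  match w, l with
  | a :: w', p :: l' => vadd (vscale a p) (lincomb w' l')
  | _, _ => vzero
  end.

Definition hull (l : list V3) : region := fun x =>
  exists w : list R, length w = length l /\ Forall (fun a => 0 <= a) w /\
    fold_right Rplus 0 w = 1 /\ x = lincomb w l.

Definition convex (A : region) : Prop :=
  forall x y t, A x -> A y -> 0 <= t <= 1 -> A (vadd x (vscale t (vsub y x))).

(* Unit triangles of a triangular lattice with origin o and unit generators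
   u, v at angle 60 degrees (so lattice triangles are unit equilateral). *)
Inductive ltri := Up (i j : Z) | Down (i j : Z).

Definition lpt (o u v : V3) (i j : Z) : V3 :=
  vadd o (vadd (vscale (IZR i) u) (vscale (IZR j) v)).

Definition ltri_pts (o u v : V3) (t : ltri) : list V3 :=
  match t with
  | Up i j => lpt o u v i j :: lpt o u v (i + 1) j :: lpt o u v i (j + 1) :: nil
  | Down i j => lpt o u v (i + 1) j :: lpt o u v i (j + 1) :: lpt o u v (i + 1) (j + 1) :: nil
  end.

(* A convex polyiamond (placed anywhere in 3-space): a convex set which is a
   nonempty finite union of unit equilateral triangles glued edge to edge,
   i.e. of triangles of one triangular lattice of unit edge length. *)
Definition convex_polyiamond (P : region) : Prop :=
  convex P /\
  exists (o u v : V3) (T : list ltri),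
    dot u u = 1 /\ dot v v = 1 /\ dot u v = 1 / 2 /\ T <> nil /\
    same_region P (fun x => exists t, In t T /\ hull (ltri_pts o u v t) x).

(* A convex polyhedron: convex hull of a finite point set with nonempty
   interior (it contains four affinely independent points). *)
Definition full_dim (S : list V3) : Prop :=
  exists a b c d, In a S /\ In b S /\ In c S /\ In d S /\
    det3 (vsub b a) (vsub c a) (vsub d a) <> 0.

(* F is a face (2-dimensional face, i.e. facet) of the convex body K:
   the intersection of K with a supporting plane, of dimension 2. *)
Definition is_face (K F : region) : Prop :=
  exists (n : V3) (c : R), n <> vzero /\
    (forall x, K x -> dot n x <= c) /\
    same_region F (fun x => K x /\ dot n x = c) /\
    exists a b d, F a /\ F b /\ F d /\ cross (vsub b a) (vsub d a) <> vzero.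

Definition can_be_domed (P : region) : Prop :=
  exists S : list V3, full_dim S /\ is_face (hull S) P /\
    forall F, is_face (hull S) F -> ~ same_region F P -> convex_polyiamond F.

(* Main.v *)
Require Import Defs.
From Stdlib Require Import Reals List ZArith Lra Lia Psatz Bool.
Open Scope R_scope.

Lemma V3_eq : forall a b : V3, vx a = vx b -> vy a = vy b -> vz a = vz b -> a = b.
Proof. intros [] []; simpl; intros; subst; reflexivity. Qed.

Ltac vunf := unfold det3 in *; unfold vadd, vsub, vscale, vzero, dot, cross in *.
Ltac veq := apply V3_eq; vunf; simpl; ring.

Definition pt (o u v : V3) (x y : R) : V3 := vadd o (vadd (vscale x u) (vscale y v)).
Definition phi (O u v w : V3) (x y z : R) : V3 :=
  vadd O (vadd (vscale x u) (vadd (vscale y v) (vscale z w))).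

Fixpoint sumR (w : list R) : R := match w with nil => 0 | a :: w' => a + sumR w' end.

Lemma sumR_fold : forall w, fold_right Rplus 0 w = sumR w.
Proof. induction w; simpl; auto. Qed.

Lemma lincomb_zero : forall l, lincomb (repeat 0 (length l)) l = vzero.
Proof. induction l; simpl. - reflexivity. - rewrite IHl. veq. Qed.

Lemma sumR_repeat0 : forall n, sumR (repeat 0 n) = 0.
Proof. induction n; simpl. - reflexivity. - rewrite IHn; ring. Qed.

Lemma hull_in : forall l p, In p l -> hull l p.
Proof.
  induction l as [|a l IH]; intros p Hp; [destruct Hp|].
  destruct Hp as [->|Hp].
  - exists (1 :: repeat 0 (length l)). simpl. rewrite repeat_length. repeat split; auto.
    + constructor; [lra|]. apply Forall_forall. intros x Hx. apply repeat_spec in Hx. lra.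
    + rewrite sumR_fold. simpl. rewrite sumR_repeat0. ring.
    + rewrite lincomb_zero. veq.
  - destruct (IH p Hp) as (w & Hl & Hf & Hs & Hx).
    exists (0 :: w). simpl. repeat split; auto.
    + constructor; [lra|auto].
    + rewrite Hs. ring.
    + rewrite <- Hx. veq.
Qed.

Lemma lincomb_dot : forall l w a, length w = length l ->
  dot a (lincomb w l) = fold_right Rplus 0 (map (fun '(x, p) => x * dot a p) (combine w l)).
Proof.
  induction l as [|p l IH]; intros [|x w] a H; simpl in *; try discriminate.
  - vunf; simpl; ring.
  - rewrite <- IH by lia. vunf. simpl. ring.
Qed.

Lemma hull_dot_le : forall l x a h, hull l x -> (forall p, In p l -> dot a p <= h) -> dot a x <= h.
Proof.
  intros l x a h (w & Hl & Hf & Hs & ->) Hp.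
  rewrite lincomb_dot by auto.
  assert (forall l w, length w = length l -> Forall (fun a => 0 <= a) w ->
            (forall p, In p l -> dot a p <= h) ->
            fold_right Rplus 0 (map (fun '(x, p) => x * dot a p) (combine w l))
            <= fold_right Rplus 0 w * h) as G.
  { clear. induction l as [|p l IH]; intros [|x w] Hl Hf Hp; simpl in *; try discriminate.
    - lra.
    - inversion Hf; subst.
      assert (x * dot a p <= x * h) by (apply Rmult_le_compat_l; auto).
      specialize (IH w ltac:(lia) H2 ltac:(auto)). lra. }
  specialize (G l w Hl Hf Hp). rewrite Hs in G. lra.
Qed.

Lemma hull_dot_ge : forall l x a h, hull l x -> (forall p, In p l -> h <= dot a p) -> h <= dot a x.
Proof.
  intros l x a h Hx Hp.
  assert (dot (vscale (-1) a) x <= - h).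
  { apply (hull_dot_le l); auto. intros p Hin. specialize (Hp p Hin). vunf. simpl in *. lra. }
  vunf; simpl in *; lra.
Qed.

Lemma lincomb_comb : forall l w1 w2 t, length w1 = length l -> length w2 = length l ->
  lincomb (map (fun '(a, b) => a + t * (b - a)) (combine w1 w2)) l =
  vadd (lincomb w1 l) (vscale t (vsub (lincomb w2 l) (lincomb w1 l))).
Proof.
  induction l as [|p l IH]; intros [|x w1] [|y w2] t H1 H2; simpl in *; try discriminate.
  - veq.
  - rewrite IH by lia. veq.
Qed.

Lemma hull_convex : forall l, convex (hull l).
Proof.
  intros l x y t (w1 & Hl1 & Hf1 & Hs1 & ->) (w2 & Hl2 & Hf2 & Hs2 & ->) Ht.
  exists (map (fun '(a, b) => a + t * (b - a)) (combine w1 w2)).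
  repeat split.
  - rewrite length_map, length_combine. lia.
  - apply Forall_forall. intros z Hz. apply in_map_iff in Hz. destruct Hz as [[a b] [<- Hin]].
    pose proof (in_combine_l _ _ _ _ Hin) as Ha. pose proof (in_combine_r _ _ _ _ Hin) as Hb.
    rewrite Forall_forall in Hf1, Hf2. specialize (Hf1 _ Ha). specialize (Hf2 _ Hb). nra.
  - clear - Hl1 Hl2 Hs1 Hs2. rewrite sumR_fold in *. 
    assert (forall w1 w2 : list R, length w1 = length w2 ->
      sumR (map (fun '(a, b) => a + t * (b - a)) (combine w1 w2)) = sumR w1 + t * (sumR w2 - sumR w1)) as G.
    { clear. intros w1'; induction w1'; intros [|b w2'] H; simpl in *; try discriminate; try ring.
      rewrite IHw1' by lia. ring. }
    rewrite G by lia. rewrite Hs1, Hs2. ring.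
  - symmetry; apply lincomb_comb; auto.
Qed.

Lemma hull3 : forall p1 p2 p3 x, hull (p1 :: p2 :: p3 :: nil) x <->
  exists a b c, 0 <= a /\ 0 <= b /\ 0 <= c /\ a + b + c = 1 /\
    x = vadd (vscale a p1) (vadd (vscale b p2) (vscale c p3)).
Proof.
  intros; split.
  - intros (w & Hl & Hf & Hs & ->).
    destruct w as [|a [|b [|c [|? ?]]]]; simpl in Hl; try discriminate.
    inversion Hf as [|? ? Ha Hf2]; inversion Hf2 as [|? ? Hb Hf3]; inversion Hf3 as [|? ? Hc _].
    exists a, b, c. simpl in Hs. repeat split; auto; try lra. simpl. veq.
  - intros (a & b & c & Ha & Hb & Hc & Hs & ->).
    exists (a :: b :: c :: nil). simpl. repeat split; auto.
    + lra.
    + veq.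
Qed.

Definition gram (u v : V3) := dot u u = 1 /\ dot v v = 1 /\ dot u v = 1 / 2.

Definition region2 (o u v : V3) (L1 U1 L2 U2 L3 U3 : Z) : region := fun x =>
  exists X Y, x = pt o u v X Y /\ IZR L1 <= X <= IZR U1 /\ IZR L2 <= Y <= IZR U2 /\
    IZR L3 <= X + Y <= IZR U3.

Definition flr (x : R) : Z := (up x - 1)%Z.
Lemma flr_spec : forall x, IZR (flr x) <= x < IZR (flr x) + 1.
Proof. intros x. unfold flr. rewrite minus_IZR. destruct (archimed x). simpl. lra. Qed.

Lemma Zle_of_R : forall a b : Z, IZR a < IZR b + 1 -> (a <= b)%Z.
Proof. intros a b H. assert (a < b + 1)%Z by (apply lt_IZR; rewrite plus_IZR; simpl; lra). lia. Qed.
Lemma Zlt_of_R : forall a b : Z, IZR a < IZR b -> (a < b)%Z.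
Proof. intros; apply lt_IZR; auto. Qed.
Lemma Zle_of_R' : forall a b : Z, IZR a <= IZR b -> (a <= b)%Z.
Proof. intros; apply le_IZR; auto. Qed.

Ltac toR H := let H' := fresh "HR" in
  first [ pose proof (IZR_le _ _ H) as H' | pose proof (IZR_lt _ _ H) as H' ];
  rewrite ?plus_IZR, ?minus_IZR, ?opp_IZR in H'.

Definition inCell (t : ltri) (X Y : R) : Prop :=
  match t with
  | Up i j => IZR i <= X /\ IZR j <= Y /\ X + Y <= IZR (i + j + 1)
  | Down i j => X <= IZR (i + 1) /\ Y <= IZR (j + 1) /\ IZR (i + j + 1) <= X + Y
  end.

Definition cellok (L1 U1 L2 U2 L3 U3 : Z) (t : ltri) : Prop :=
  match t with
  | Up i j => (L1 <= i /\ i + 1 <= U1 /\ L2 <= j /\ j + 1 <= U2 /\ L3 <= i + j /\ i + j + 1 <= U3)%Z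
  | Down i j => (L1 <= i /\ i + 1 <= U1 /\ L2 <= j /\ j + 1 <= U2 /\ L3 <= i + j + 1 /\ i + j + 2 <= U3)%Z
  end.

Lemma cell_hull : forall o u v t x, hull (ltri_pts o u v t) x <->
  exists X Y, x = pt o u v X Y /\ inCell t X Y.
Proof.
  intros o u v t x. destruct t as [i j|i j]; simpl; rewrite hull3; unfold lpt; split.
  - intros (a & b & c & Ha & Hb & Hc & Hs & ->).
    exists (IZR i + b), (IZR j + c). rewrite !plus_IZR. split.
    + replace a with (1 - b - c) by lra. unfold pt. veq.
    + simpl. lra.
  - intros (X & Y & -> & H1 & H2 & H3). rewrite !plus_IZR in *. simpl in *.
    exists (1 - (X - IZR i) - (Y - IZR j)), (X - IZR i), (Y - IZR j).
    repeat split; try lra. unfold pt. veq.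
  - intros (a & b & c & Ha & Hb & Hc & Hs & ->).
    exists (IZR i + 1 - b), (IZR j + 1 - a). rewrite !plus_IZR. split.
    + replace c with (1 - a - b) by lra. unfold pt. veq.
    + simpl. lra.
  - intros (X & Y & -> & H1 & H2 & H3). rewrite !plus_IZR in *. simpl in *.
    exists (IZR j + 1 - Y), (IZR i + 1 - X), (X + Y - IZR i - IZR j - 1).
    repeat split; try lra. unfold pt. veq.
Qed.

Definition NoInt (A B : R) := forall n : Z, (IZR n <= B -> IZR n <= A) /\ (B <= IZR n -> A <= IZR n).

Lemma noint_pos : forall A D, 0 < D -> exists tau, 0 < tau /\ forall t, 0 < t <= tau -> NoInt A (A + t * D).
Proof.
  intros A D HD. destruct (flr_spec A) as [F1 F2].
  set (g := IZR (flr A) + 1 - A).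
  exists (g / (2 * D)). split.
  - unfold g. apply Rdiv_lt_0_compat; lra.
  - intros t [Ht1 Ht2].
    assert (t * D <= g / 2).
    { apply Rmult_le_compat_r with (r := D) in Ht2; [|lra].
      replace (g / (2 * D) * D) with (g / 2) in Ht2 by (field; lra). lra. }
    assert (0 < t * D) by (apply Rmult_lt_0_compat; lra).
    intros n; split; intros Hn.
    + assert (n <= flr A)%Z by (apply Zle_of_R; unfold g in *; lra).
      apply IZR_le in H1. lra.
    + lra.
Qed.

Lemma noint_exists : forall A D, exists tau, 0 < tau /\ forall t, 0 < t <= tau -> NoInt A (A + t * D).
Proof.
  intros A D. destruct (Rtotal_order D 0) as [HD|[HD|HD]].
  - destruct (noint_pos (- A) (- D)) as (tau & Htau & H); [lra|].
    exists tau; split; auto. intros t Ht n. destruct (H t Ht (- n)%Z) as [H1 H2].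
    rewrite opp_IZR in *. split; intros; [assert (- A <= - IZR n) by (apply H2; lra) | assert (- IZR n <= - A) by (apply H1; lra)]; lra.
  - exists 1. split; [lra|]. intros t Ht n. subst. split; intros; lra.
  - apply noint_pos; auto.
Qed.

Lemma floor_cell : forall L1 U1 L2 U2 L3 U3 X Y,
  IZR L1 < X < IZR U1 -> IZR L2 < Y < IZR U2 -> IZR L3 < X + Y < IZR U3 ->
  exists t, cellok L1 U1 L2 U2 L3 U3 t /\ inCell t X Y.
Proof.
  intros L1 U1 L2 U2 L3 U3 X Y H1 H2 H3.
  destruct (flr_spec X) as [FX1 FX2]. destruct (flr_spec Y) as [FY1 FY2].
  set (i := flr X) in *. set (j := flr Y) in *.
  destruct (Rle_dec (X + Y) (IZR i + IZR j + 1)).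
  - exists (Up i j). simpl. rewrite !plus_IZR. simpl. repeat split; try lra.
    + apply Zle_of_R. lra.
    + assert (i < U1)%Z by (apply Zlt_of_R; lra). lia.
    + apply Zle_of_R. lra.
    + assert (j < U2)%Z by (apply Zlt_of_R; lra). lia.
    + apply Zle_of_R. rewrite plus_IZR. lra.
    + assert (i + j < U3)%Z by (apply Zlt_of_R; rewrite plus_IZR; lra). lia.
  - exists (Down i j). simpl. rewrite !plus_IZR. simpl. repeat split; try lra.
    + apply Zle_of_R. lra.
    + assert (i < U1)%Z by (apply Zlt_of_R; lra). lia.
    + apply Zle_of_R. lra.
    + assert (j < U2)%Z by (apply Zlt_of_R; lra). lia.
    + apply Zle_of_R. rewrite !plus_IZR. simpl. lra.
    + assert (i + j + 1 < U3)%Z by (apply Zlt_of_R; rewrite !plus_IZR; simpl; lra). lia.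
Qed.

Lemma cover2 : forall L1 U1 L2 U2 L3 U3 X Y Xs Ys,
  IZR L1 <= X <= IZR U1 -> IZR L2 <= Y <= IZR U2 -> IZR L3 <= X + Y <= IZR U3 ->
  IZR L1 < Xs < IZR U1 -> IZR L2 < Ys < IZR U2 -> IZR L3 < Xs + Ys < IZR U3 ->
  exists t, cellok L1 U1 L2 U2 L3 U3 t /\ inCell t X Y.
Proof.
  intros L1 U1 L2 U2 L3 U3 X Y Xs Ys H1 H2 H3 S1 S2 S3.
  destruct (noint_exists X (Xs - X)) as (t1 & T1 & N1).
  destruct (noint_exists Y (Ys - Y)) as (t2 & T2 & N2).
  destruct (noint_exists (X + Y) ((Xs + Ys) - (X + Y))) as (t3 & T3 & N3).
  set (t0 := Rmin (Rmin t1 t2) (Rmin t3 1)).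
  assert (0 < t0) by (unfold t0; repeat apply Rmin_glb_lt; lra).
  assert (t0 <= t1 /\ t0 <= t2 /\ t0 <= t3 /\ t0 <= 1) as (E1 & E2 & E3 & E4).
  { unfold t0. repeat split.
    - eapply Rle_trans; apply Rmin_l.
    - eapply Rle_trans; [apply Rmin_l|apply Rmin_r].
    - eapply Rle_trans; [apply Rmin_r|apply Rmin_l].
    - eapply Rle_trans; [apply Rmin_r|apply Rmin_r]. }
  specialize (N1 t0 ltac:(lra)). specialize (N2 t0 ltac:(lra)). specialize (N3 t0 ltac:(lra)).
  set (X0 := X + t0 * (Xs - X)) in *. set (Y0 := Y + t0 * (Ys - Y)) in *.
  assert (E : X + Y + t0 * (Xs + Ys - (X + Y)) = X0 + Y0) by (unfold X0, Y0; ring).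
  rewrite E in N3.
  assert (IZR L1 < X0 < IZR U1 /\ IZR L2 < Y0 < IZR U2 /\ IZR L3 < X0 + Y0 < IZR U3) as (G1 & G2 & G3).
  { unfold X0, Y0. repeat split; nra. }
  destruct (floor_cell L1 U1 L2 U2 L3 U3 X0 Y0 G1 G2 G3) as (t & Hok & Hin).
  exists t. split; auto. destruct t as [i j|i j]; simpl in *; destruct Hin as (I1 & I2 & I3).
  - split; [|split].
    + apply (N1 i); auto.
    + apply (N2 j); auto.
    + apply (N3 (i + j + 1)%Z); auto.
  - split; [|split].
    + apply (N1 (i + 1)%Z); auto.
    + apply (N2 (j + 1)%Z); auto.
    + apply (N3 (i + j + 1)%Z); auto.
Qed.

Lemma pt_cross : forall o u v X1 Y1 X2 Y2 X3 Y3,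
  cross (vsub (pt o u v X2 Y2) (pt o u v X1 Y1)) (vsub (pt o u v X3 Y3) (pt o u v X1 Y1)) =
  vscale ((X2 - X1) * (Y3 - Y1) - (X3 - X1) * (Y2 - Y1)) (cross u v).
Proof. intros. unfold pt. veq. Qed.

Definition zrange (lo hi : Z) : list Z :=
  map (fun n => (lo + Z.of_nat n)%Z) (seq 0 (Z.to_nat (hi - lo + 1))).

Lemma zrange_in : forall lo hi n, (lo <= n <= hi)%Z -> In n (zrange lo hi).
Proof.
  intros lo hi n H. unfold zrange. apply in_map_iff. exists (Z.to_nat (n - lo)).
  split; [lia|]. apply in_seq. lia.
Qed.

Definition okb (L1 U1 L2 U2 L3 U3 : Z) (t : ltri) : bool :=
  match t with
  | Up i j => ((L1 <=? i) && (i + 1 <=? U1) && (L2 <=? j) && (j + 1 <=? U2) && (L3 <=? i + j) && (i + j + 1 <=? U3))%Z%bool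
  | Down i j => ((L1 <=? i) && (i + 1 <=? U1) && (L2 <=? j) && (j + 1 <=? U2) && (L3 <=? i + j + 1) && (i + j + 2 <=? U3))%Z%bool
  end.

Lemma okb_iff : forall L1 U1 L2 U2 L3 U3 t, okb L1 U1 L2 U2 L3 U3 t = true <-> cellok L1 U1 L2 U2 L3 U3 t.
Proof.
  intros. destruct t; simpl; rewrite !andb_true_iff, !Z.leb_le; tauto.
Qed.

Definition T2 (L1 U1 L2 U2 L3 U3 : Z) : list ltri :=
  filter (okb L1 U1 L2 U2 L3 U3)
    (flat_map (fun i => flat_map (fun j => Up i j :: Down i j :: nil) (zrange L2 U2)) (zrange L1 U1)).

Lemma T2_in : forall L1 U1 L2 U2 L3 U3 t, cellok L1 U1 L2 U2 L3 U3 t <-> In t (T2 L1 U1 L2 U2 L3 U3).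
Proof.
  intros. unfold T2. rewrite filter_In, okb_iff. split; [|tauto]. intros H; split; auto.
  apply in_flat_map. destruct t as [i j|i j]; simpl in H; exists i; split;
    try (apply zrange_in; lia); apply in_flat_map; exists j; split; try (apply zrange_in; lia); simpl; auto.
Qed.

Lemma cell_region : forall L1 U1 L2 U2 L3 U3 t X Y, cellok L1 U1 L2 U2 L3 U3 t -> inCell t X Y ->
  IZR L1 <= X <= IZR U1 /\ IZR L2 <= Y <= IZR U2 /\ IZR L3 <= X + Y <= IZR U3.
Proof.
  intros L1 U1 L2 U2 L3 U3 [i j|i j] X Y Hok Hin; simpl in *; rewrite ?plus_IZR in Hin; simpl in Hin;
  destruct Hok as (O1 & O2 & O3 & O4 & O5 & O6);
  toR O1; toR O2; toR O3; toR O4; toR O5; toR O6; simpl in *; lra.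
Qed.

Lemma region2_convex : forall o u v L1 U1 L2 U2 L3 U3, convex (region2 o u v L1 U1 L2 U2 L3 U3).
Proof.
  intros o u v L1 U1 L2 U2 L3 U3 x y t (X & Y & -> & H1 & H2 & H3) (X' & Y' & -> & H1' & H2' & H3') Ht.
  exists (X + t * (X' - X)), (Y + t * (Y' - Y)). split.
  - unfold pt. veq.
  - repeat split; nra.
Qed.

Lemma det_zero : forall o u v X1 Y1 X2 Y2 X3 Y3,
  (X2 - X1) * (Y3 - Y1) - (X3 - X1) * (Y2 - Y1) = 0 ->
  cross (vsub (pt o u v X2 Y2) (pt o u v X1 Y1)) (vsub (pt o u v X3 Y3) (pt o u v X1 Y1)) = vzero.
Proof. intros. rewrite pt_cross, H. veq. Qed.

Lemma centroid_strict : forall o u v L1 U1 L2 U2 L3 U3 p1 p2 p3,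
  region2 o u v L1 U1 L2 U2 L3 U3 p1 -> region2 o u v L1 U1 L2 U2 L3 U3 p2 ->
  region2 o u v L1 U1 L2 U2 L3 U3 p3 -> cross (vsub p2 p1) (vsub p3 p1) <> vzero ->
  exists Xs Ys, IZR L1 < Xs < IZR U1 /\ IZR L2 < Ys < IZR U2 /\ IZR L3 < Xs + Ys < IZR U3.
Proof.
  intros o u v L1 U1 L2 U2 L3 U3 p1 p2 p3 (X1 & Y1 & -> & A1 & B1 & C1) (X2 & Y2 & -> & A2 & B2 & C2)
    (X3 & Y3 & -> & A3 & B3 & C3) Hc.
  exists ((X1 + X2 + X3) / 3), ((Y1 + Y2 + Y3) / 3).
  assert (Hd : forall K, (X2 - X1) * (Y3 - Y1) - (X3 - X1) * (Y2 - Y1) = K -> K <> 0).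
  { intros K HK HK0. apply Hc. apply det_zero. lra. }
  repeat split.
  - destruct (Rlt_dec (IZR L1) ((X1 + X2 + X3) / 3)) as [?|n]; auto. exfalso.
    apply (Hd 0); auto. replace X1 with (IZR L1) by lra. replace X2 with (IZR L1) by lra. replace X3 with (IZR L1) by lra. ring.
  - destruct (Rlt_dec ((X1 + X2 + X3) / 3) (IZR U1)) as [?|n]; auto. exfalso.
    apply (Hd 0); auto. replace X1 with (IZR U1) by lra. replace X2 with (IZR U1) by lra. replace X3 with (IZR U1) by lra. ring.
  - destruct (Rlt_dec (IZR L2) ((Y1 + Y2 + Y3) / 3)) as [?|n]; auto. exfalso.
    apply (Hd 0); auto. replace Y1 with (IZR L2) by lra. replace Y2 with (IZR L2) by lra. replace Y3 with (IZR L2) by lra. ring.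
  - destruct (Rlt_dec ((Y1 + Y2 + Y3) / 3) (IZR U2)) as [?|n]; auto. exfalso.
    apply (Hd 0); auto. replace Y1 with (IZR U2) by lra. replace Y2 with (IZR U2) by lra. replace Y3 with (IZR U2) by lra. ring.
  - destruct (Rlt_dec (IZR L3) ((X1 + X2 + X3) / 3 + (Y1 + Y2 + Y3) / 3)) as [?|n]; auto. exfalso.
    apply (Hd 0); auto. replace X1 with (IZR L3 - Y1) by lra. replace X2 with (IZR L3 - Y2) by lra. replace X3 with (IZR L3 - Y3) by lra. ring.
  - destruct (Rlt_dec ((X1 + X2 + X3) / 3 + (Y1 + Y2 + Y3) / 3) (IZR U3)) as [?|n]; auto. exfalso.
    apply (Hd 0); auto. replace X1 with (IZR U3 - Y1) by lra. replace X2 with (IZR U3 - Y2) by lra. replace X3 with (IZR U3 - Y3) by lra. ring.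
Qed.

Lemma poly2 : forall o u v L1 U1 L2 U2 L3 U3, gram u v ->
  forall p1 p2 p3, region2 o u v L1 U1 L2 U2 L3 U3 p1 -> region2 o u v L1 U1 L2 U2 L3 U3 p2 ->
  region2 o u v L1 U1 L2 U2 L3 U3 p3 -> cross (vsub p2 p1) (vsub p3 p1) <> vzero ->
  convex_polyiamond (region2 o u v L1 U1 L2 U2 L3 U3).
Proof.
  intros o u v L1 U1 L2 U2 L3 U3 (G1 & G2 & G3) p1 p2 p3 R1 R2 R3 Hc.
  destruct (centroid_strict o u v L1 U1 L2 U2 L3 U3 p1 p2 p3 R1 R2 R3 Hc) as (Xs & Ys & S1 & S2 & S3).
  assert (Hcov : forall x, region2 o u v L1 U1 L2 U2 L3 U3 x ->
            exists t, In t (T2 L1 U1 L2 U2 L3 U3) /\ hull (ltri_pts o u v t) x).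
  { intros x (X & Y & -> & H1 & H2 & H3).
    destruct (cover2 L1 U1 L2 U2 L3 U3 X Y Xs Ys H1 H2 H3 S1 S2 S3) as (t & Hok & Hin).
    exists t. split; [apply T2_in; auto|]. apply cell_hull. exists X, Y; auto. }
  split; [apply region2_convex|].
  exists o, u, v, (T2 L1 U1 L2 U2 L3 U3). repeat split; auto.
  - destruct (Hcov p1 R1) as (t & Ht & _). intros E; rewrite E in Ht; destruct Ht.
  - intros (t & Ht & Hx). apply T2_in in Ht. apply cell_hull in Hx. destruct Hx as (X & Y & -> & Hin).
    exists X, Y. split; auto. eapply cell_region; eauto.
Qed.

Definition PIa (P : region) (o u v : V3) (T : list ltri) :=
  convex P /\ gram u v /\ T <> nil /\
  same_region P (fun x => exists t, In t T /\ hull (ltri_pts o u v t) x).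

Definition tverts (t : ltri) : list (Z * Z) :=
  match t with
  | Up i j => (i, j) :: ((i + 1)%Z, j) :: (i, (j + 1)%Z) :: nil
  | Down i j => ((i + 1)%Z, j) :: (i, (j + 1)%Z) :: ((i + 1)%Z, (j + 1)%Z) :: nil
  end.

Definition VT (T : list ltri) := flat_map tverts T.

Definition fmin (f : Z * Z -> Z) (s : Z) (l : list (Z * Z)) := fold_right (fun y m => Z.min (f y) m) s l.
Definition fmax (f : Z * Z -> Z) (s : Z) (l : list (Z * Z)) := fold_right (fun y m => Z.max (f y) m) s l.

Lemma fmin_le : forall f s l, (fmin f s l <= s)%Z /\ forall y, In y l -> (fmin f s l <= f y)%Z.
Proof.
  intros f s l; induction l as [|x l IH]; simpl; [split; [lia|tauto]|].
  destruct IH as [IH1 IH2]. split; [lia|]. intros y [->|Hy]; [lia|]. specialize (IH2 y Hy); lia.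
Qed.
Lemma fmax_ge : forall f s l, (s <= fmax f s l)%Z /\ forall y, In y l -> (f y <= fmax f s l)%Z.
Proof.
  intros f s l; induction l as [|x l IH]; simpl; [split; [lia|tauto]|].
  destruct IH as [IH1 IH2]. split; [lia|]. intros y [->|Hy]; [lia|]. specialize (IH2 y Hy); lia.
Qed.
Lemma fmin_in : forall f s l, fmin f s l = s \/ exists y, In y l /\ f y = fmin f s l.
Proof.
  intros f s l; induction l as [|x l IH]; simpl; [auto|].
  destruct (Z.min_spec (f x) (fmin f s l)) as [[H1 H2]|[H1 H2]]; unfold fmin in *; rewrite H2.
  - right. exists x; auto.
  - destruct IH as [IH|(y & Hy & Hf)]; [left; auto| right; exists y; auto].
Qed.
Lemma fmax_in : forall f s l, fmax f s l = s \/ exists y, In y l /\ f y = fmax f s l.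
Proof.
  intros f s l; induction l as [|x l IH]; simpl; [auto|].
  destruct (Z.max_spec (f x) (fmax f s l)) as [[H1 H2]|[H1 H2]]; unfold fmax in *; rewrite H2.
  - destruct IH as [IH|(y & Hy & Hf)]; [left; auto| right; exists y; auto].
  - right. exists x; auto.
Qed.

Definition bmin (f : Z * Z -> Z) (T : list ltri) := fmin f (f (hd (0%Z, 0%Z) (VT T))) (VT T).
Definition bmax (f : Z * Z -> Z) (T : list ltri) := fmax f (f (hd (0%Z, 0%Z) (VT T))) (VT T).

Lemma VT_nonnil : forall T, T <> nil -> VT T <> nil.
Proof. intros [|t T] H; [congruence|]. destruct t; simpl; discriminate. Qed.

Lemma bmin_le : forall f T y, In y (VT T) -> (bmin f T <= f y)%Z.
Proof. intros. apply fmin_le; auto. Qed.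
Lemma bmax_ge : forall f T y, In y (VT T) -> (f y <= bmax f T)%Z.
Proof. intros. apply fmax_ge; auto. Qed.
Lemma bmin_in : forall f T, T <> nil -> exists y, In y (VT T) /\ f y = bmin f T.
Proof.
  intros f T HT. unfold bmin. destruct (fmin_in f (f (hd (0%Z, 0%Z) (VT T))) (VT T)) as [H|H]; auto.
  exists (hd (0%Z, 0%Z) (VT T)). split; auto. apply VT_nonnil in HT. destruct (VT T); simpl; [congruence|auto].
Qed.
Lemma bmax_in : forall f T, T <> nil -> exists y, In y (VT T) /\ f y = bmax f T.
Proof.
  intros f T HT. unfold bmax. destruct (fmax_in f (f (hd (0%Z, 0%Z) (VT T))) (VT T)) as [H|H]; auto.
  exists (hd (0%Z, 0%Z) (VT T)). split; auto. apply VT_nonnil in HT. destruct (VT T); simpl; [congruence|auto].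
Qed.

Definition fI (p : Z * Z) := fst p.
Definition fJ (p : Z * Z) := snd p.
Definition fS (p : Z * Z) := (fst p + snd p)%Z.

Definition LP (P : region) o u v (i j : Z) := P (pt o u v (IZR i) (IZR j)).

Lemma dot_pt : forall a o u v X Y, dot a (pt o u v X Y) = dot a o + X * dot a u + Y * dot a v.
Proof. intros. unfold pt. vunf. simpl. ring. Qed.

Lemma pt_inj : forall o u v X Y X' Y', gram u v -> pt o u v X Y = pt o u v X' Y' -> X = X' /\ Y = Y'.
Proof.
  intros o u v X Y X' Y' (G1 & G2 & G3) E.
  assert (E1 := f_equal (dot u) E). assert (E2 := f_equal (dot v) E).
  rewrite !dot_pt in E1, E2.
  assert (dot v u = 1/2) by (rewrite <- G3; vunf; ring).
  rewrite G1, G3 in E1. rewrite G2, H in E2. lra.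
Qed.

Lemma PI_cells : forall P o u v T, PIa P o u v T -> forall x, P x ->
  exists t X Y, In t T /\ x = pt o u v X Y /\ inCell t X Y.
Proof.
  intros P o u v T (Hc & Hg & HT & HP) x Hx. apply HP in Hx. destruct Hx as (t & Ht & Hx).
  apply cell_hull in Hx. destruct Hx as (X & Y & -> & Hin). exists t, X, Y; auto.
Qed.

Lemma PI_verts : forall P o u v T, PIa P o u v T -> forall t p, In t T -> In p (tverts t) ->
  LP P o u v (fst p) (snd p).
Proof.
  intros P o u v T (Hc & Hg & HT & HP) t p Ht Hp. unfold LP. apply HP. exists t. split; auto.
  apply hull_in. destruct t as [i j|i j]; simpl in Hp |- *;
  destruct Hp as [<-|[<-|[<-|[]]]]; simpl; auto.
Qed.

Definition openCell (t : ltri) (X Y : R) : Prop :=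
  match t with
  | Up i j => IZR i < X /\ IZR j < Y /\ X + Y < IZR (i + j + 1)
  | Down i j => X < IZR (i + 1) /\ Y < IZR (j + 1) /\ IZR (i + j + 1) < X + Y
  end.

Lemma open_closed : forall s t X Y, openCell s X Y -> inCell t X Y -> s = t.
Proof.
  intros [i j|i j] [i' j'|i' j'] X Y; simpl; rewrite ?plus_IZR; simpl; intros (A1 & A2 & A3) (B1 & B2 & B3).
  - assert (i' <= i)%Z by (apply Zle_of_R; lra). assert (j' <= j)%Z by (apply Zle_of_R; lra).
    assert (i + j < i' + j' + 1)%Z by (apply Zlt_of_R; rewrite !plus_IZR; simpl; lra).
    f_equal; lia.
  - assert (i <= i')%Z by (apply Zle_of_R; lra). assert (j <= j')%Z by (apply Zle_of_R; lra).
    assert (i' + j' < i + j)%Z by (apply Zlt_of_R; rewrite !plus_IZR; simpl; lra). lia.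
  - assert (i' <= i)%Z by (apply Zle_of_R; lra). assert (j' <= j)%Z by (apply Zle_of_R; lra).
    assert (i + j < i' + j')%Z by (apply Zlt_of_R; rewrite !plus_IZR; simpl; lra). lia.
  - assert (i <= i')%Z by (apply Zle_of_R; lra). assert (j <= j')%Z by (apply Zle_of_R; lra).
    assert (i' + j' < i + j + 1)%Z by (apply Zlt_of_R; rewrite !plus_IZR; simpl; lra).
    f_equal; lia.
Qed.

Lemma PI_open : forall P o u v T, PIa P o u v T -> forall s X Y, P (pt o u v X Y) -> openCell s X Y ->
  forall p, In p (tverts s) -> LP P o u v (fst p) (snd p).
Proof.
  intros P o u v T H s X Y HP Ho p Hp.
  destruct (PI_cells P o u v T H _ HP) as (t & X' & Y' & Ht & E & Hin).
  destruct H as (Hc & Hg & HT & HPe).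
  apply pt_inj in E; auto. destruct E as [<- <-].
  assert (s = t) by (eapply open_closed; eauto). subst.
  eapply PI_verts; eauto. split; auto.
Qed.

Lemma P_conv : forall P o u v, convex P -> forall X Y X' Y' t, P (pt o u v X Y) -> P (pt o u v X' Y') ->
  0 <= t <= 1 -> P (pt o u v (X + t * (X' - X)) (Y + t * (Y' - Y))).
Proof.
  intros P o u v Hc X Y X' Y' t H1 H2 Ht.
  replace (pt o u v (X + t * (X' - X)) (Y + t * (Y' - Y))) with
    (vadd (pt o u v X Y) (vscale t (vsub (pt o u v X' Y') (pt o u v X Y)))) by (unfold pt; veq).
  apply Hc; auto.
Qed.

Lemma descent : forall (Q : Z -> Prop) (lo : Z), (forall y, (lo < y)%Z -> Q y -> Q (y - 1)%Z) ->
  forall y, (lo <= y)%Z -> Q y -> Q lo.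
Proof.
  intros Q lo Hs y Hy. remember (Z.to_nat (y - lo)) as n. revert y Hy Heqn.
  induction n; intros y Hy Heqn HQ.
  - replace lo with y by lia. auto.
  - apply (IHn (y - 1)%Z); try lia. apply Hs; auto; lia.
Qed.

Lemma ascent : forall (Q : Z -> Prop) (hi : Z), (forall y, (y < hi)%Z -> Q y -> Q (y + 1)%Z) ->
  forall y, (y <= hi)%Z -> Q y -> Q hi.
Proof.
  intros Q hi Hs y Hy HQ. remember (Z.to_nat (hi - y)) as n. revert y Hy Heqn HQ.
  induction n; intros y Hy Heqn HQ.
  - replace hi with y by lia. auto.
  - apply (IHn (y + 1)%Z); try lia. apply Hs; auto; lia.
Qed.

Lemma eps_exists : forall K, 0 < K -> exists e, 0 < e /\ e * K < 1.
Proof.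
  intros K HK. exists (/ (1 + K)). split.
  - apply Rinv_0_lt_compat; lra.
  - apply Rmult_lt_reg_l with (1 + K); [lra|]. rewrite <- Rmult_assoc, Rinv_r by lra. lra.
Qed.

Lemma eps1 : forall K, 1 <= K -> exists e, 0 < e <= 1 /\ e * K < 1.
Proof.
  intros K HK. destruct (eps_exists K) as (e & He & HeK); [lra|]. exists e. split; [split|]; auto. nra.
Qed.

Lemma step : forall P o u v T, PIa P o u v T -> forall m1 m2 W1 W2 s, LP P o u v m1 m2 -> P (pt o u v W1 W2) ->
  (exists e, 0 <= e <= 1 /\ openCell s (IZR m1 + e * (W1 - IZR m1)) (IZR m2 + e * (W2 - IZR m2))) ->
  forall p, In p (tverts s) -> LP P o u v (fst p) (snd p).
Proof.
  intros P o u v T H m1 m2 W1 W2 s Hm HW (e & He & Ho).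
  apply (PI_open P o u v T H s _ _ (P_conv P o u v (proj1 H) _ _ _ _ e Hm HW He) Ho).
Qed.

Lemma in_VT : forall T t p, In t T -> In p (tverts t) -> In p (VT T).
Proof. intros. apply in_flat_map. eauto. Qed.

Lemma PI_cellok : forall P o u v T, PIa P o u v T -> forall t, In t T ->
  cellok (bmin fI T) (bmax fI T) (bmin fJ T) (bmax fJ T) (bmin fS T) (bmax fS T) t.
Proof.
  intros P o u v T H t Ht.
  assert (Hv : forall p, In p (tverts t) -> In p (VT T)) by (intros; eapply in_VT; eauto).
  destruct t as [i j|i j]; simpl in Hv |- *.
  - pose proof (bmin_le fI T _ (Hv _ (or_introl eq_refl))).
    pose proof (bmax_ge fI T _ (Hv _ (or_intror (or_introl eq_refl)))).
    pose proof (bmin_le fJ T _ (Hv _ (or_introl eq_refl))).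
    pose proof (bmax_ge fJ T _ (Hv _ (or_intror (or_intror (or_introl eq_refl))))).
    pose proof (bmin_le fS T _ (Hv _ (or_introl eq_refl))).
    pose proof (bmax_ge fS T _ (Hv _ (or_intror (or_introl eq_refl)))).
    unfold fI, fJ, fS in *; simpl in *; lia.
  - pose proof (bmin_le fI T _ (Hv _ (or_intror (or_introl eq_refl)))).
    pose proof (bmax_ge fI T _ (Hv _ (or_introl eq_refl))).
    pose proof (bmin_le fJ T _ (Hv _ (or_introl eq_refl))).
    pose proof (bmax_ge fJ T _ (Hv _ (or_intror (or_introl eq_refl)))).
    pose proof (bmin_le fS T _ (Hv _ (or_introl eq_refl))).
    pose proof (bmax_ge fS T _ (Hv _ (or_intror (or_intror (or_introl eq_refl))))).
    unfold fI, fJ, fS in *; simpl in *; lia.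
Qed.

Lemma PI_bounds : forall P o u v T, PIa P o u v T -> forall x, P x ->
  region2 o u v (bmin fI T) (bmax fI T) (bmin fJ T) (bmax fJ T) (bmin fS T) (bmax fS T) x.
Proof.
  intros P o u v T H x Hx. destruct (PI_cells P o u v T H x Hx) as (t & X & Y & Ht & -> & Hin).
  exists X, Y. split; auto. eapply cell_region; eauto. eapply PI_cellok; eauto.
Qed.

Lemma LP_bounds : forall P o u v T, PIa P o u v T -> forall i j, LP P o u v i j ->
  (bmin fI T <= i <= bmax fI T /\ bmin fJ T <= j <= bmax fJ T /\ bmin fS T <= i + j <= bmax fS T)%Z.
Proof.
  intros P o u v T H i j Hl. destruct (PI_bounds P o u v T H _ Hl) as (X & Y & E & B1 & B2 & B3).
  apply pt_inj in E; [|apply H]. destruct E as [<- <-]. rewrite <- plus_IZR in B3.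
  repeat split; apply le_IZR; lra.
Qed.

Lemma witness : forall P o u v T, PIa P o u v T -> forall f, (f = fI \/ f = fJ \/ f = fS) ->
  (exists p, LP P o u v (fst p) (snd p) /\ f p = bmin f T) /\
  (exists p, LP P o u v (fst p) (snd p) /\ f p = bmax f T).
Proof.
  intros P o u v T H f _. assert (HT : T <> nil) by apply H. split.
  - destruct (bmin_in f T HT) as (p & Hp & E). exists p; split; auto.
    apply in_flat_map in Hp. destruct Hp as (t & Ht & Hp). eapply PI_verts; eauto.
  - destruct (bmax_in f T HT) as (p & Hp & E). exists p; split; auto.
    apply in_flat_map in Hp. destruct Hp as (t & Ht & Hp). eapply PI_verts; eauto.
Qed.

Ltac getw H f := let h := fresh in
  destruct (witness _ _ _ _ _ H f ltac:(auto)) as [h _] || fail.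

Lemma corner3 : forall P o u v T, PIa P o u v T -> LP P o u v (bmax fI T) (bmin fJ T).
Proof.
  intros P o u v T H.
  set (d := bmax fI T). set (b := bmin fJ T).
  destruct (witness _ _ _ _ _ H fI ltac:(auto)) as [_ ((dd & jD) & HD & ED)].
  destruct (witness _ _ _ _ _ H fJ ltac:(auto)) as [((iB & bb) & HB & EB) _].
  change (fI (dd, jD)) with dd in ED. change (fJ (iB, bb)) with bb in EB. fold d in ED. fold b in EB. subst dd bb. simpl in HD, HB.
  destruct (LP_bounds _ _ _ _ _ H _ _ HB) as (B1 & B2 & B3).
  destruct (LP_bounds _ _ _ _ _ H _ _ HD) as (D1 & D2 & D3).
  fold d b in B1, B2, B3, D1, D2, D3.
  destruct (Z.eq_dec iB d) as [->|Hne]; auto.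
  apply (descent (fun y => LP P o u v d y) b) with (y := jD); [|lia|auto].
  intros y Hy Hl.
  assert (Hk : (1 <= IZR (d - iB) + IZR (y - b))%R) by (rewrite <- plus_IZR; apply IZR_le; lia).
  destruct (eps1 _ Hk) as (e & He & HeK). rewrite !minus_IZR in HeK.
  assert (IZR iB < IZR d) by (apply IZR_lt; lia). assert (IZR b < IZR y) by (apply IZR_lt; lia).
  assert (0 < e * (IZR d - IZR iB)) by (apply Rmult_lt_0_compat; lra).
  assert (0 < e * (IZR y - IZR b)) by (apply Rmult_lt_0_compat; lra).
  apply (step P o u v T H d y (IZR iB) (IZR b) (Down (d - 1) (y - 1)) Hl HB) with (p := (d, (y - 1)%Z)).
  - exists e. split; [lra|]. simpl. rewrite !plus_IZR, !minus_IZR. simpl. repeat split; lra.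
  - simpl. left. f_equal. lia.
Qed.

Ltac prepW H f wh :=
  let p := fresh "p" in let q := fresh "q" in let Hp := fresh "HW" in let E := fresh "EW" in
  destruct (witness _ _ _ _ _ H f ltac:(auto)) as wh.

Lemma corner2 : forall P o u v T, PIa P o u v T -> LP P o u v (bmin fS T - bmin fJ T) (bmin fJ T).
Proof.
  intros P o u v T H.
  set (c := bmin fS T). set (b := bmin fJ T).
  destruct (witness _ _ _ _ _ H fJ ltac:(auto)) as [((iB & bb) & HB & EB) _].
  destruct (witness _ _ _ _ _ H fS ltac:(auto)) as [((iC & jC) & HC & EC) _].
  change (fJ (iB, bb)) with bb in EB. change (fS (iC, jC)) with (iC + jC)%Z in EC.
  fold b in EB. fold c in EC. subst bb. simpl in HB, HC.
  destruct (LP_bounds _ _ _ _ _ H _ _ HB) as (B1 & B2 & B3).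
  destruct (LP_bounds _ _ _ _ _ H _ _ HC) as (C1 & C2 & C3).
  fold b c in B1, B2, B3, C1, C2, C3.
  destruct (Z.eq_dec jC b) as [->|Hne].
  { replace (c - b)%Z with iC by lia. auto. }
  apply (descent (fun x => LP P o u v x b) (c - b)) with (y := iB); [|lia|auto].
  intros x Hx Hl.
  assert (Hk : (1 <= IZR (x - iC))%R) by (apply IZR_le; lia).
  destruct (eps1 _ Hk) as (e & He & HeK). rewrite !minus_IZR in HeK.
  assert (E1 : (IZR iC + IZR jC = IZR c)%R) by (rewrite <- plus_IZR; f_equal; lia).
  assert (IZR b < IZR jC) by (apply IZR_lt; lia). assert (IZR c < IZR x + IZR b) by (rewrite <- plus_IZR; apply IZR_lt; lia).
  assert (0 < e * (IZR jC - IZR b)) by (apply Rmult_lt_0_compat; lra).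
  assert (0 < e * (IZR x + IZR b - IZR c)) by (apply Rmult_lt_0_compat; lra).
  apply (step P o u v T H x b (IZR iC) (IZR jC) (Up (x - 1) b) Hl HC) with (p := ((x - 1)%Z, b)).
  - exists e. split; [lra|]. simpl. rewrite !plus_IZR, !minus_IZR. simpl. repeat split; nra.
  - simpl. left. auto.
Qed.

Lemma corner1 : forall P o u v T, PIa P o u v T -> LP P o u v (bmin fI T) (bmin fS T - bmin fI T).
Proof.
  intros P o u v T H.
  set (c := bmin fS T). set (a := bmin fI T).
  destruct (witness _ _ _ _ _ H fI ltac:(auto)) as [((aa & jA) & HA & EA) _].
  destruct (witness _ _ _ _ _ H fS ltac:(auto)) as [((iC & jC) & HC & EC) _].
  change (fI (aa, jA)) with aa in EA. change (fS (iC, jC)) with (iC + jC)%Z in EC.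
  fold a in EA. fold c in EC. subst aa. simpl in HA, HC.
  destruct (LP_bounds _ _ _ _ _ H _ _ HA) as (B1 & B2 & B3).
  destruct (LP_bounds _ _ _ _ _ H _ _ HC) as (C1 & C2 & C3).
  fold a c in B1, B2, B3, C1, C2, C3.
  destruct (Z.eq_dec iC a) as [->|Hne].
  { replace (c - a)%Z with jC by lia. auto. }
  apply (descent (fun y => LP P o u v a y) (c - a)) with (y := jA); [|lia|auto].
  intros y Hy Hl.
  assert (Hk : (1 <= IZR (y - jC))%R) by (apply IZR_le; lia).
  destruct (eps1 _ Hk) as (e & He & HeK). rewrite !minus_IZR in HeK.
  assert (E1 : (IZR iC + IZR jC = IZR c)%R) by (rewrite <- plus_IZR; f_equal; lia).
  assert (IZR a < IZR iC) by (apply IZR_lt; lia). assert (IZR c < IZR a + IZR y) by (rewrite <- plus_IZR; apply IZR_lt; lia).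
  assert (0 < e * (IZR iC - IZR a)) by (apply Rmult_lt_0_compat; lra).
  assert (0 < e * (IZR a + IZR y - IZR c)) by (apply Rmult_lt_0_compat; lra).
  apply (step P o u v T H a y (IZR iC) (IZR jC) (Up a (y - 1)) Hl HC) with (p := (a, (y - 1)%Z)).
  - exists e. split; [lra|]. simpl. rewrite !plus_IZR, !minus_IZR. simpl. repeat split; nra.
  - simpl. left. auto.
Qed.

Lemma corner4 : forall P o u v T, PIa P o u v T -> LP P o u v (bmax fI T) (bmax fS T - bmax fI T).
Proof.
  intros P o u v T H.
  set (f := bmax fS T). set (d := bmax fI T).
  destruct (witness _ _ _ _ _ H fI ltac:(auto)) as [_ ((dd & jD) & HD & ED)].
  destruct (witness _ _ _ _ _ H fS ltac:(auto)) as [_ ((iF & jF) & HF & EF)].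
  change (fI (dd, jD)) with dd in ED. change (fS (iF, jF)) with (iF + jF)%Z in EF.
  fold d in ED. fold f in EF. subst dd. simpl in HD, HF.
  destruct (LP_bounds _ _ _ _ _ H _ _ HD) as (B1 & B2 & B3).
  destruct (LP_bounds _ _ _ _ _ H _ _ HF) as (C1 & C2 & C3).
  fold d f in B1, B2, B3, C1, C2, C3.
  destruct (Z.eq_dec iF d) as [->|Hne].
  { replace (f - d)%Z with jF by lia. auto. }
  apply (ascent (fun y => LP P o u v d y) (f - d)) with (y := jD); [|lia|auto].
  intros y Hy Hl.
  assert (Hk : (1 <= IZR (jF - y))%R) by (apply IZR_le; lia).
  destruct (eps1 _ Hk) as (e & He & HeK). rewrite !minus_IZR in HeK.
  assert (E1 : (IZR iF + IZR jF = IZR f)%R) by (rewrite <- plus_IZR; f_equal; lia).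
  assert (IZR iF < IZR d) by (apply IZR_lt; lia). assert (IZR d + IZR y < IZR f) by (rewrite <- plus_IZR; apply IZR_lt; lia).
  assert (0 < e * (IZR d - IZR iF)) by (apply Rmult_lt_0_compat; lra).
  assert (0 < e * (IZR f - IZR d - IZR y)) by (apply Rmult_lt_0_compat; lra).
  cut (LP P o u v (d - 1 + 1) (y + 1)); [replace (d - 1 + 1)%Z with d by lia; auto|].
  apply (step P o u v T H d y (IZR iF) (IZR jF) (Down (d - 1) y) Hl HF) with (p := ((d - 1 + 1)%Z, (y + 1)%Z)).
  - exists e. split; [lra|]. simpl. rewrite !plus_IZR, !minus_IZR. simpl. repeat split; nra.
  - simpl. auto.
Qed.

Lemma corner5 : forall P o u v T, PIa P o u v T -> LP P o u v (bmax fS T - bmax fJ T) (bmax fJ T).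
Proof.
  intros P o u v T H.
  set (f := bmax fS T). set (e0 := bmax fJ T).
  destruct (witness _ _ _ _ _ H fJ ltac:(auto)) as [_ ((iE & ee) & HE & EE)].
  destruct (witness _ _ _ _ _ H fS ltac:(auto)) as [_ ((iF & jF) & HF & EF)].
  change (fJ (iE, ee)) with ee in EE. change (fS (iF, jF)) with (iF + jF)%Z in EF.
  fold e0 in EE. fold f in EF. subst ee. simpl in HE, HF.
  destruct (LP_bounds _ _ _ _ _ H _ _ HE) as (B1 & B2 & B3).
  destruct (LP_bounds _ _ _ _ _ H _ _ HF) as (C1 & C2 & C3).
  fold e0 f in B1, B2, B3, C1, C2, C3.
  destruct (Z.eq_dec jF e0) as [->|Hne].
  { replace (f - e0)%Z with iF by lia. auto. }
  apply (ascent (fun x => LP P o u v x e0) (f - e0)) with (y := iE); [|lia|auto].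
  intros x Hx Hl.
  assert (Hk : (1 <= IZR (iF - x))%R) by (apply IZR_le; lia).
  destruct (eps1 _ Hk) as (e & He & HeK). rewrite !minus_IZR in HeK.
  assert (E1 : (IZR iF + IZR jF = IZR f)%R) by (rewrite <- plus_IZR; f_equal; lia).
  assert (IZR jF < IZR e0) by (apply IZR_lt; lia). assert (IZR x + IZR e0 < IZR f) by (rewrite <- plus_IZR; apply IZR_lt; lia).
  assert (0 < e * (IZR e0 - IZR jF)) by (apply Rmult_lt_0_compat; lra).
  assert (0 < e * (IZR f - IZR x - IZR e0)) by (apply Rmult_lt_0_compat; lra).
  cut (LP P o u v (x + 1) (e0 - 1 + 1)); [replace (e0 - 1 + 1)%Z with e0 by lia; auto|].
  apply (step P o u v T H x e0 (IZR iF) (IZR jF) (Down x (e0 - 1)) Hl HF) with (p := ((x + 1)%Z, (e0 - 1 + 1)%Z)).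
  - exists e. split; [lra|]. simpl. rewrite !plus_IZR, !minus_IZR. simpl. repeat split; nra.
  - simpl. auto.
Qed.

Lemma corner6 : forall P o u v T, PIa P o u v T -> LP P o u v (bmin fI T) (bmax fJ T).
Proof.
  intros P o u v T H.
  set (a := bmin fI T). set (e0 := bmax fJ T).
  destruct (witness _ _ _ _ _ H fI ltac:(auto)) as [((aa & jA) & HA & EA) _].
  destruct (witness _ _ _ _ _ H fJ ltac:(auto)) as [_ ((iE & ee) & HE & EE)].
  change (fI (aa, jA)) with aa in EA. change (fJ (iE, ee)) with ee in EE.
  fold a in EA. fold e0 in EE. subst aa ee. simpl in HA, HE.
  destruct (LP_bounds _ _ _ _ _ H _ _ HA) as (B1 & B2 & B3).
  destruct (LP_bounds _ _ _ _ _ H _ _ HE) as (C1 & C2 & C3).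
  fold a e0 in B1, B2, B3, C1, C2, C3.
  destruct (Z.eq_dec iE a) as [->|Hne]; auto.
  apply (ascent (fun y => LP P o u v a y) e0) with (y := jA); [|lia|auto].
  intros y Hy Hl.
  assert (Hk : (1 <= IZR (iE - a) + IZR (e0 - y))%R) by (rewrite <- plus_IZR; apply IZR_le; lia).
  destruct (eps1 _ Hk) as (e & He & HeK). rewrite !minus_IZR in HeK.
  assert (IZR a < IZR iE) by (apply IZR_lt; lia). assert (IZR y < IZR e0) by (apply IZR_lt; lia).
  assert (0 < e * (IZR iE - IZR a)) by (apply Rmult_lt_0_compat; lra).
  assert (0 < e * (IZR e0 - IZR y)) by (apply Rmult_lt_0_compat; lra).
  apply (step P o u v T H a y (IZR iE) (IZR e0) (Up a y) Hl HE) with (p := (a, (y + 1)%Z)).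
  - exists e. split; [lra|]. simpl. rewrite !plus_IZR. simpl. repeat split; nra.
  - simpl. auto.
Qed.

Lemma seg_param : forall lo hi X, lo <= X <= hi -> exists t, 0 <= t <= 1 /\ X = lo + t * (hi - lo).
Proof.
  intros lo hi X H. destruct (Req_dec lo hi) as [E|E].
  - exists 0. split; [lra|]. subst. lra.
  - exists ((X - lo) / (hi - lo)). split.
    + split; [unfold Rdiv; apply Rmult_le_pos; [lra|left; apply Rinv_0_lt_compat; lra]|]. apply Rmult_le_reg_r with (hi - lo); [lra|].
      unfold Rdiv. rewrite Rmult_assoc, Rinv_l by lra. lra.
    + field. lra.
Qed.

Lemma seg_P : forall P o u v, convex P -> forall A1 B1 A2 B2 X Y, P (pt o u v A1 B1) -> P (pt o u v A2 B2) ->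
  (exists t, 0 <= t <= 1 /\ X = A1 + t * (A2 - A1) /\ Y = B1 + t * (B2 - B1)) -> P (pt o u v X Y).
Proof.
  intros P o u v Hc A1 B1 A2 B2 X Y H1 H2 (t & Ht & -> & ->). apply P_conv; auto.
Qed.

Lemma PI_eq : forall P o u v T, PIa P o u v T ->
  same_region P (region2 o u v (bmin fI T) (bmax fI T) (bmin fJ T) (bmax fJ T) (bmin fS T) (bmax fS T)).
Proof.
  intros P o u v T H x. split; [apply PI_bounds; auto|].
  intros (X & Y & -> & B1 & B2 & B3).
  pose proof (corner1 P o u v T H) as K1. pose proof (corner2 P o u v T H) as K2.
  pose proof (corner3 P o u v T H) as K3. pose proof (corner4 P o u v T H) as K4.
  pose proof (corner5 P o u v T H) as K5. pose proof (corner6 P o u v T H) as K6.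
  unfold LP in *. rewrite !minus_IZR in *.
  set (a := IZR (bmin fI T)) in *. set (d := IZR (bmax fI T)) in *.
  set (b := IZR (bmin fJ T)) in *. set (e := IZR (bmax fJ T)) in *.
  set (c := IZR (bmin fS T)) in *. set (f := IZR (bmax fS T)) in *.
  destruct H as (Hc & _).
  assert (Lo : P (pt o u v X (Rmax b (c - X)))).
  { destruct (Rle_dec X (c - b)).
    - rewrite Rmax_right by lra.
      destruct (seg_param a (c - b) X ltac:(lra)) as (t & Ht & EX).
      apply (seg_P P o u v Hc a (c - a) (c - b) b); auto. exists t. split; auto. split; auto. lra.
    - rewrite Rmax_left by lra.
      destruct (seg_param (c - b) d X ltac:(lra)) as (t & Ht & EX).
      apply (seg_P P o u v Hc (c - b) b d b); auto. exists t. split; auto. split; auto. lra. }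
  assert (Hi : P (pt o u v X (Rmin e (f - X)))).
  { destruct (Rle_dec X (f - e)).
    - rewrite Rmin_left by lra.
      destruct (seg_param a (f - e) X ltac:(lra)) as (t & Ht & EX).
      apply (seg_P P o u v Hc a e (f - e) e); auto. exists t. split; auto. split; auto. lra.
    - rewrite Rmin_right by lra.
      destruct (seg_param (f - e) d X ltac:(lra)) as (t & Ht & EX).
      apply (seg_P P o u v Hc (f - e) e d (f - d)); auto. exists t. split; auto. split; auto. lra. }
  assert (Rmax b (c - X) <= Y <= Rmin e (f - X)).
  { split; [apply Rmax_lub|apply Rmin_glb]; lra. }
  destruct (seg_param _ _ Y H) as (t & Ht & EY).
  apply (seg_P P o u v Hc X (Rmax b (c - X)) X (Rmin e (f - X))); auto. exists t. split; auto. split; auto. lra.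
Qed.

Definition X3 (a d b e c f : Z) (i j k : R) : Prop :=
  0 <= k /\ IZR a <= i <= IZR d /\ IZR b <= j <= IZR e /\ IZR c <= i + j + k <= IZR f.

Definition Lint (a d b e c f : Z) : list (Z * Z * Z) :=
  filter (fun '(i, j, k) => ((c <=? i + j + k) && (i + j + k <=? f))%Z)
    (flat_map (fun i => flat_map (fun j => map (fun k => (i, j, k)) (zrange 0 (f - a - b))) (zrange b e))
       (zrange a d)).

Definition gZ (O u v w : V3) (t : Z * Z * Z) : V3 :=
  match t with (i, j, k) => phi O u v w (IZR i) (IZR j) (IZR k) end.

Definition Sl (O u v w : V3) (a d b e c f : Z) : list V3 := map (gZ O u v w) (Lint a d b e c f).

Lemma Lint_in : forall a d b e c f i j k, X3 a d b e c f (IZR i) (IZR j) (IZR k) ->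
  In (i, j, k) (Lint a d b e c f).
Proof.
  intros a d b e c f i j k (H1 & H2 & H3 & H4). rewrite <- !plus_IZR in H4.
  assert (0 <= k)%Z by (apply le_IZR; auto).
  assert (a <= i <= d)%Z by (split; apply le_IZR; lra).
  assert (b <= j <= e)%Z by (split; apply le_IZR; lra).
  assert (c <= i + j + k <= f)%Z by (split; apply le_IZR; lra).
  unfold Lint. apply filter_In. split.
  - apply in_flat_map. exists i. split; [apply zrange_in; lia|].
    apply in_flat_map. exists j. split; [apply zrange_in; lia|].
    apply in_map_iff. exists k. split; auto. apply zrange_in; lia.
  - apply andb_true_iff. rewrite !Z.leb_le. lia.
Qed.

Lemma Lint_X3 : forall a d b e c f i j k, In (i, j, k) (Lint a d b e c f) ->
  X3 a d b e c f (IZR i) (IZR j) (IZR k).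
Proof.
  intros a d b e c f i j k H. unfold Lint in H. apply filter_In in H. destruct H as [H Hb].
  apply andb_true_iff in Hb. rewrite !Z.leb_le in Hb.
  apply in_flat_map in H. destruct H as (i' & Hi & H).
  apply in_flat_map in H. destruct H as (j' & Hj & H).
  apply in_map_iff in H. destruct H as (k' & E & Hk). inversion E; subst.
  unfold zrange in Hi, Hj, Hk. apply in_map_iff in Hi, Hj, Hk.
  destruct Hi as (ni & Ei & Hi). destruct Hj as (nj & Ej & Hj). destruct Hk as (nk & Ek & Hk).
  apply in_seq in Hi, Hj, Hk.
  unfold X3. rewrite <- !plus_IZR.
  repeat split; apply IZR_le; lia.
Qed.

Lemma S_in : forall O u v w a d b e c f (i j k : Z), X3 a d b e c f (IZR i) (IZR j) (IZR k) ->
  hull (Sl O u v w a d b e c f) (phi O u v w (IZR i) (IZR j) (IZR k)).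
Proof.
  intros. apply hull_in. unfold Sl. apply in_map_iff. exists (i, j, k). split; auto. apply Lint_in; auto.
Qed.

Fixpoint wsum (w : list R) (L : list (Z * Z * Z)) (F : Z * Z * Z -> R) : R :=
  match w, L with
  | x :: w', p :: L' => x * F p + wsum w' L' F
  | _, _ => 0
  end.

Definition Fi (t : Z * Z * Z) : R := match t with (i, _, _) => IZR i end.
Definition Fj (t : Z * Z * Z) : R := match t with (_, j, _) => IZR j end.
Definition Fk (t : Z * Z * Z) : R := match t with (_, _, k) => IZR k end.

Lemma lincomb_map : forall O u v w L ws,
  lincomb ws (map (gZ O u v w) L) =
  vadd (vscale (wsum ws L (fun _ => 1)) O)
   (vadd (vscale (wsum ws L Fi) u) (vadd (vscale (wsum ws L Fj) v) (vscale (wsum ws L Fk) w))).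
Proof.
  intros O u v w L. induction L as [|[[i j] k] L IH]; intros [|x ws]; simpl; try (veq).
  rewrite IH. unfold phi. veq.
Qed.

Lemma wsum_one : forall ws L, length ws = length L -> wsum ws L (fun _ => 1) = fold_right Rplus 0 ws.
Proof. induction ws; intros [|p L] H; simpl in *; try discriminate; auto. rewrite IHws by lia. ring. Qed.

Lemma wsum_lin : forall ws L A B C, wsum ws L (fun p => A * Fi p + B * Fj p + C * Fk p) =
  A * wsum ws L Fi + B * wsum ws L Fj + C * wsum ws L Fk.
Proof. induction ws; intros [|p L] A B C; simpl; try ring. rewrite IHws. ring. Qed.

Lemma wsum_le : forall ws L F h, Forall (fun x => 0 <= x) ws -> (forall p, In p L -> F p <= h) ->
  wsum ws L F <= wsum ws L (fun _ => 1) * h.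
Proof.
  induction ws as [|x ws IH]; intros [|p L] F h Hw Hp; simpl; try lra.
  inversion Hw; subst. specialize (IH L F h H2 ltac:(intros; apply Hp; simpl; auto)).
  assert (x * F p <= x * h) by (apply Rmult_le_compat_l; auto; apply Hp; simpl; auto). nra.
Qed.

Lemma lin_bound : forall ws L A B C h, length ws = length L -> Forall (fun x => 0 <= x) ws ->
  fold_right Rplus 0 ws = 1 -> (forall p, In p L -> A * Fi p + B * Fj p + C * Fk p <= h) ->
  A * wsum ws L Fi + B * wsum ws L Fj + C * wsum ws L Fk <= h.
Proof.
  intros. rewrite <- wsum_lin. eapply Rle_trans; [apply wsum_le; eauto|].
  rewrite wsum_one by auto. rewrite H1. lra.
Qed.

Lemma hull_S_X3 : forall O u v w a d b e c f x, hull (Sl O u v w a d b e c f) x ->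
  exists i j k, X3 a d b e c f i j k /\ x = phi O u v w i j k.
Proof.
  intros O u v w a d b e c f x (ws & Hl & Hf & Hs & ->).
  unfold Sl in *. rewrite length_map in Hl. rewrite lincomb_map.
  set (L := Lint a d b e c f) in *.
  exists (wsum ws L Fi), (wsum ws L Fj), (wsum ws L Fk).
  assert (HX : forall p, In p L -> X3 a d b e c f (Fi p) (Fj p) (Fk p)).
  { intros [[i j] k] Hp. apply Lint_X3; auto. }
  assert (G : forall A B C h, (forall p, In p L -> A * Fi p + B * Fj p + C * Fk p <= h) ->
     A * wsum ws L Fi + B * wsum ws L Fj + C * wsum ws L Fk <= h) by (intros; apply lin_bound; auto).
  split.
  - unfold X3. repeat split.
    + assert (H := G 0 0 (-1) 0 ltac:(intros p Hp; destruct (HX p Hp) as (? & ? & ? & ?); lra)). lra.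
    + assert (H := G (-1) 0 0 (- IZR a) ltac:(intros p Hp; destruct (HX p Hp) as (? & ? & ? & ?); lra)). lra.
    + assert (H := G 1 0 0 (IZR d) ltac:(intros p Hp; destruct (HX p Hp) as (? & ? & ? & ?); lra)). lra.
    + assert (H := G 0 (-1) 0 (- IZR b) ltac:(intros p Hp; destruct (HX p Hp) as (? & ? & ? & ?); lra)). lra.
    + assert (H := G 0 1 0 (IZR e) ltac:(intros p Hp; destruct (HX p Hp) as (? & ? & ? & ?); lra)). lra.
    + assert (H := G (-1) (-1) (-1) (- IZR c) ltac:(intros p Hp; destruct (HX p Hp) as (? & ? & ? & ?); lra)). lra.
    + assert (H := G 1 1 1 (IZR f) ltac:(intros p Hp; destruct (HX p Hp) as (? & ? & ? & ?); lra)). lra.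
  - rewrite wsum_one by auto. rewrite Hs. unfold phi. veq.
Qed.

Definition frac (x : R) := x - IZR (flr x).

Lemma frac_spec : forall x, 0 <= frac x < 1 /\ x = IZR (flr x) + frac x.
Proof. intros x. unfold frac. destruct (flr_spec x). split; [split|]; lra. Qed.

Lemma flr_int : forall n s, 0 <= s < 1 -> flr (IZR n + s) = n.
Proof.
  intros n s Hs. destruct (flr_spec (IZR n + s)) as [H1 H2].
  assert (flr (IZR n + s) <= n)%Z by (apply Zle_of_R; lra).
  assert (n <= flr (IZR n + s))%Z by (apply Zle_of_R; lra). lia.
Qed.

Lemma frac_IZR : forall n, frac (IZR n) = 0.
Proof. intros. unfold frac. replace (IZR n) with (IZR n + 0) by ring. rewrite flr_int by lra. ring. Qed.

Lemma frac_int_add : forall n s, 0 <= s < 1 -> frac (IZR n + s) = s.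
Proof. intros. unfold frac. rewrite flr_int by auto. ring. Qed.

Definition ind (x : R) : nat := if Req_EM_T (frac x) 0 then 0%nat else 1%nat.

Lemma ind_le1 : forall x, (ind x <= 1)%nat.
Proof. intros; unfold ind; destruct Req_EM_T; lia. Qed.

Lemma dc_floor : forall (Fm Fn C : Z) dm dn, 0 <= dm < 1 -> 0 <= dn < 1 ->
  IZR Fm + dm - (IZR Fn + dn) <= IZR C -> IZR Fm - IZR Fn <= IZR C.
Proof.
  intros. assert (Fm - Fn <= C)%Z by (apply Zle_of_R; rewrite minus_IZR; lra).
  apply IZR_le in H2. rewrite minus_IZR in H2. lra.
Qed.

Lemma dc_ratio : forall (Fm Fn C : Z) dm dn M, 0 <= dm <= M -> 0 <= dn <= M -> dm < 1 -> dn < 1 -> 0 < M ->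
  IZR Fm + dm - (IZR Fn + dn) <= IZR C -> IZR Fm + dm / M - (IZR Fn + dn / M) <= IZR C.
Proof.
  intros Fm Fn C dm dn M H1 H2 H3 H4 HM H.
  assert (R1 : 0 <= dm / M <= 1).
  { split; [apply Rmult_le_pos; [lra|left; apply Rinv_0_lt_compat; lra]|].
    apply Rmult_le_reg_r with M; auto. unfold Rdiv. rewrite Rmult_assoc, Rinv_l by lra. lra. }
  assert (R2 : 0 <= dn / M) by (apply Rmult_le_pos; [lra|left; apply Rinv_0_lt_compat; lra]).
  destruct (Z_lt_le_dec (Fm - Fn) C) as [L|L].
  - assert (Fm - Fn + 1 <= C)%Z by lia. apply IZR_le in H0. rewrite plus_IZR, minus_IZR in H0. lra.
  - assert (Fm - Fn <= C)%Z by (apply Zle_of_R; rewrite minus_IZR; lra).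
    assert (Fm - Fn = C)%Z by lia. subst C. rewrite minus_IZR in H.
    assert (dm <= dn) by lra.
    assert (dm / M <= dn / M) by (apply Rmult_le_compat_r; [left; apply Rinv_0_lt_compat|]; lra).
    rewrite minus_IZR. lra.
Qed.

(* coordinates p = i, q = i + j, r = i + j + k *)
Definition XD (a d b e c f : Z) (p q r : R) : Prop :=
  IZR a <= p <= IZR d /\ IZR b <= q - p <= IZR e /\ IZR c <= r <= IZR f /\ q <= r.

Lemma XD_X3 : forall a d b e c f p q r, XD a d b e c f p q r <-> X3 a d b e c f p (q - p) (r - q).
Proof. intros. unfold XD, X3. split; intros; lra. Qed.

Definition psi O u v w (p q r : R) := phi O u v w p (q - p) (r - q).

Lemma XD_floor : forall a d b e c f p q r, XD a d b e c f p q r ->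
  XD a d b e c f (IZR (flr p)) (IZR (flr q)) (IZR (flr r)).
Proof.
  intros a d b e c f p q r (H1 & H2 & H3 & H4).
  destruct (frac_spec p) as [Fp Ep]. destruct (frac_spec q) as [Fq Eq]. destruct (frac_spec r) as [Fr Er].
  set (dp := frac p) in *. set (dq := frac q) in *. set (dr := frac r) in *.
  assert (Z0 : IZR 0 = 0) by reflexivity.
  unfold XD. repeat split.
  - assert (IZR 0 - IZR (flr p) <= IZR (- a)).
    { apply (dc_floor 0 (flr p) (- a) 0 dp); try lra. rewrite opp_IZR. lra. }
    rewrite opp_IZR in H. lra.
  - pose proof (dc_floor (flr p) 0 d dp 0 ltac:(lra) ltac:(lra) ltac:(lra)); lra.
  - assert (IZR (flr p) - IZR (flr q) <= IZR (- b)).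
    { apply (dc_floor (flr p) (flr q) (- b) dp dq); try lra. rewrite opp_IZR. lra. }
    rewrite opp_IZR in H. lra.
  - pose proof (dc_floor (flr q) (flr p) e dq dp ltac:(lra) ltac:(lra) ltac:(lra)); lra.
  - assert (IZR 0 - IZR (flr r) <= IZR (- c)).
    { apply (dc_floor 0 (flr r) (- c) 0 dr); try lra. rewrite opp_IZR. lra. }
    rewrite opp_IZR in H. lra.
  - pose proof (dc_floor (flr r) 0 f dr 0 ltac:(lra) ltac:(lra) ltac:(lra)); lra.
  - assert (IZR (flr q) - IZR (flr r) <= IZR 0).
    { apply (dc_floor (flr q) (flr r) 0 dq dr); lra. }
    lra.
Qed.

Lemma XD_ratio : forall a d b e c f p q r M,
  XD a d b e c f p q r -> 0 < M -> frac p <= M -> frac q <= M -> frac r <= M ->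
  XD a d b e c f (IZR (flr p) + frac p / M) (IZR (flr q) + frac q / M) (IZR (flr r) + frac r / M).
Proof.
  intros a d b e c f p q r M (H1 & H2 & H3 & H4) HM Mp Mq Mr.
  destruct (frac_spec p) as [Fp Ep]. destruct (frac_spec q) as [Fq Eq]. destruct (frac_spec r) as [Fr Er].
  set (dp := frac p) in *. set (dq := frac q) in *. set (dr := frac r) in *.
  assert (Z0 : IZR 0 = 0) by reflexivity.
  assert (E0 : 0 / M = 0) by (unfold Rdiv; ring).
  unfold XD. repeat split.
  - assert (IZR 0 + 0 / M - (IZR (flr p) + dp / M) <= IZR (- a)).
    { apply (dc_ratio 0 (flr p) (- a) 0 dp M); try lra. rewrite opp_IZR. lra. }
    rewrite opp_IZR in H. lra.
  - assert (IZR (flr p) + dp / M - (IZR 0 + 0 / M) <= IZR d).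
    { apply (dc_ratio (flr p) 0 d dp 0 M); try lra. }
    lra.
  - assert (IZR (flr p) + dp / M - (IZR (flr q) + dq / M) <= IZR (- b)).
    { apply (dc_ratio (flr p) (flr q) (- b) dp dq M); try lra. rewrite opp_IZR. lra. }
    rewrite opp_IZR in H. lra.
  - pose proof (dc_ratio (flr q) (flr p) e dq dp M ltac:(lra) ltac:(lra) ltac:(lra) ltac:(lra) ltac:(lra) ltac:(lra)); lra.
  - assert (IZR 0 + 0 / M - (IZR (flr r) + dr / M) <= IZR (- c)).
    { apply (dc_ratio 0 (flr r) (- c) 0 dr M); try lra. rewrite opp_IZR. lra. }
    rewrite opp_IZR in H. lra.
  - assert (IZR (flr r) + dr / M - (IZR 0 + 0 / M) <= IZR f).
    { apply (dc_ratio (flr r) 0 f dr 0 M); try lra. }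
    lra.
  - assert (IZR (flr q) + dq / M - (IZR (flr r) + dr / M) <= IZR 0).
    { apply (dc_ratio (flr q) (flr r) 0 dq dr M); lra. }
    lra.
Qed.

Lemma ind_ratio : forall x M, 0 < M -> frac x <= M -> M < 1 ->
  (ind (IZR (flr x) + frac x / M) <= ind x)%nat /\
  (frac x = M -> ind (IZR (flr x) + frac x / M) = 0%nat /\ ind x = 1%nat).
Proof.
  intros x M HM H1 H2. destruct (frac_spec x) as [F E].
  assert (R2 : 0 <= frac x / M) by (apply Rmult_le_pos; [lra|left; apply Rinv_0_lt_compat; lra]).
  split.
  - unfold ind at 2. destruct (Req_EM_T (frac x) 0) as [Z|Z].
    + rewrite Z. replace (0 / M) with 0 by (unfold Rdiv; ring). rewrite Rplus_0_r.
      unfold ind. rewrite frac_IZR. destruct Req_EM_T; [lia|congruence].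
    + apply ind_le1.
  - intros EM. rewrite EM. replace (M / M) with 1 by (field; lra).
    unfold ind. rewrite <- plus_IZR, frac_IZR. split.
    + destruct Req_EM_T; [lia|congruence].
    + destruct Req_EM_T; [lra|lia].
Qed.

Lemma psi_affine : forall O u v w A1 A2 A3 B1 B2 B3 M,
  psi O u v w (A1 + M * (B1 - A1)) (A2 + M * (B2 - A2)) (A3 + M * (B3 - A3)) =
  vadd (psi O u v w A1 A2 A3) (vscale M (vsub (psi O u v w B1 B2 B3) (psi O u v w A1 A2 A3))).
Proof. intros. unfold psi, phi. veq. Qed.

Lemma round3 : forall O u v w a d b e c f N p q r,
  (ind p + ind q + ind r <= N)%nat -> XD a d b e c f p q r ->
  hull (Sl O u v w a d b e c f) (psi O u v w p q r).
Proof.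
  intros O u v w a d b e c f N. induction N as [|N IH]; intros p q r Hn HX.
  - assert (Hint : forall x, ind x = 0%nat -> x = IZR (flr x)).
    { intros x Hx. unfold ind in Hx. destruct Req_EM_T as [Z|Z]; [|lia].
      destruct (frac_spec x) as [_ E]. lra. }
    rewrite (Hint p), (Hint q), (Hint r) in HX |- * by lia.
    unfold psi. rewrite <- !minus_IZR. apply S_in. rewrite !minus_IZR. apply XD_X3; auto.
  - destruct (Nat.eq_dec (ind p + ind q + ind r) 0) as [Z|Z].
    { apply (IH p q r); auto; lia. }
    destruct (frac_spec p) as [Fp Ep]. destruct (frac_spec q) as [Fq Eq]. destruct (frac_spec r) as [Fr Er].
    set (M := Rmax (frac p) (Rmax (frac q) (frac r))).
    assert (Mp : frac p <= M) by apply Rmax_l.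
    assert (Mq : frac q <= M) by (eapply Rle_trans; [apply Rmax_l|apply Rmax_r]).
    assert (Mr : frac r <= M) by (eapply Rle_trans; [apply Rmax_r|apply Rmax_r]).
    assert (M1 : M < 1) by (unfold M; repeat apply Rmax_lub_lt; lra).
    assert (HM : M = frac p \/ M = frac q \/ M = frac r).
    { unfold M. destruct (Rle_dec (frac q) (frac r)).
      - rewrite (Rmax_right (frac q)) by auto. destruct (Rle_dec (frac p) (frac r)).
        + rewrite Rmax_right by auto. auto.
        + rewrite Rmax_left by lra. auto.
      - rewrite (Rmax_left (frac q)) by lra. destruct (Rle_dec (frac p) (frac q)).
        + rewrite Rmax_right by auto. auto.
        + rewrite Rmax_left by lra. auto. }
    assert (M0 : 0 < M).
    { destruct (Rle_lt_or_eq_dec 0 M) as [?|E0]; auto; [lra|]. exfalso. apply Z.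
      assert (frac p = 0 /\ frac q = 0 /\ frac r = 0) as (A1 & A2 & A3) by lra.
      unfold ind. rewrite A1, A2, A3. destruct Req_EM_T; [|congruence]. auto. }
    destruct (ind_ratio p M M0 Mp M1) as [Ip Jp].
    destruct (ind_ratio q M M0 Mq M1) as [Iq Jq].
    destruct (ind_ratio r M M0 Mr M1) as [Ir Jr].
    set (p1 := IZR (flr p) + frac p / M). set (q1 := IZR (flr q) + frac q / M). set (r1 := IZR (flr r) + frac r / M).
    assert (H1 : hull (Sl O u v w a d b e c f) (psi O u v w p1 q1 r1)).
    { apply IH; [|apply XD_ratio; auto].
      destruct HM as [E|[E|E]]; symmetry in E.
      - destruct (Jp E). unfold p1, q1, r1. lia.
      - destruct (Jq E). unfold p1, q1, r1. lia.
      - destruct (Jr E). unfold p1, q1, r1. lia. }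
    assert (H0 : hull (Sl O u v w a d b e c f) (psi O u v w (IZR (flr p)) (IZR (flr q)) (IZR (flr r)))).
    { unfold psi. rewrite <- !minus_IZR. apply S_in. rewrite !minus_IZR. apply XD_X3. apply XD_floor; auto. }
    assert (Ep' : IZR (flr p) + M * (p1 - IZR (flr p)) = p).
    { unfold p1. replace (M * (IZR (flr p) + frac p / M - IZR (flr p))) with (frac p) by (field; lra). lra. }
    assert (Eq' : IZR (flr q) + M * (q1 - IZR (flr q)) = q).
    { unfold q1. replace (M * (IZR (flr q) + frac q / M - IZR (flr q))) with (frac q) by (field; lra). lra. }
    assert (Er' : IZR (flr r) + M * (r1 - IZR (flr r)) = r).
    { unfold r1. replace (M * (IZR (flr r) + frac r / M - IZR (flr r))) with (frac r) by (field; lra). lra. }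
    rewrite <- Ep', <- Eq', <- Er'. rewrite psi_affine.
    apply hull_convex; auto. lra.
Qed.

Lemma X3_hull : forall O u v w a d b e c f i j k, X3 a d b e c f i j k ->
  hull (Sl O u v w a d b e c f) (phi O u v w i j k).
Proof.
  intros. replace (phi O u v w i j k) with (psi O u v w i (i + j) (i + j + k)).
  - apply (round3 _ _ _ _ _ _ _ _ _ _ 3). { pose proof (ind_le1 i); pose proof (ind_le1 (i + j)); pose proof (ind_le1 (i + j + k)); lia. }
    apply XD_X3. replace (i + j - i) with j by ring. replace (i + j + k - (i + j)) with k by ring. auto.
  - unfold psi. f_equal; ring.
Qed.

Definition kap := 2 * sqrt 2 / 3.
Definition wv (u v : V3) : V3 := vadd (vscale (1/3) (vadd u v)) (vscale kap (cross u v)).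

Lemma kap2 : kap * kap = 8 / 9.
Proof. unfold kap. replace (2 * sqrt 2 / 3 * (2 * sqrt 2 / 3)) with (4 / 9 * (sqrt 2 * sqrt 2)) by field.
  rewrite sqrt_sqrt by lra. field. Qed.

Lemma kap_pos : 0 < kap.
Proof. unfold kap. assert (0 < sqrt 2) by (apply sqrt_lt_R0; lra). lra. Qed.

Lemma cross_sq : forall u v, dot (cross u v) (cross u v) = dot u u * dot v v - dot u v * dot u v.
Proof. intros. vunf. simpl. ring. Qed.

Lemma cross_sq_gram : forall u v, gram u v -> dot (cross u v) (cross u v) = 3 / 4.
Proof. intros u v (G1 & G2 & G3). rewrite cross_sq, G1, G2, G3. field. Qed.

Lemma w_gram : forall u v, gram u v -> gram u (wv u v) /\ gram v (wv u v).
Proof.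
  intros u v G. pose proof (cross_sq_gram u v G) as C. destruct G as (G1 & G2 & G3).
  assert (Dw : dot (wv u v) (wv u v) = (1/9) * (dot u u + 2 * dot u v + dot v v) +
     2 * (1/3) * kap * (dot u (cross u v) + dot v (cross u v)) + kap * kap * dot (cross u v) (cross u v))
    by (unfold wv; vunf; simpl; field).
  assert (U0 : dot u (cross u v) = 0) by (vunf; simpl; ring).
  assert (V0 : dot v (cross u v) = 0) by (vunf; simpl; ring).
  assert (Du : dot u (wv u v) = (1/3) * (dot u u + dot u v) + kap * dot u (cross u v)) by (unfold wv; vunf; simpl; field).
  assert (Dv : dot v (wv u v) = (1/3) * (dot u v + dot v v) + kap * dot v (cross u v)) by (unfold wv; vunf; simpl; field).
  rewrite U0, V0, C, kap2, G1, G2, G3 in *.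
  unfold gram. repeat split; auto; try lra.
Qed.

Lemma gram_sym : forall u v, gram u v -> gram v u.
Proof. intros u v (G1 & G2 & G3). unfold gram. repeat split; auto. rewrite <- G3. vunf; ring. Qed.

Lemma gram_diff : forall u v w, gram u v -> gram u w -> gram v w -> gram (vsub u w) (vsub v w).
Proof.
  intros u v w (G1 & G2 & G3) (_ & G4 & G5) (_ & _ & G6). unfold gram.
  assert (E1 : dot (vsub u w) (vsub u w) = dot u u - 2 * dot u w + dot w w) by (vunf; simpl; ring).
  assert (E2 : dot (vsub v w) (vsub v w) = dot v v - 2 * dot v w + dot w w) by (vunf; simpl; ring).
  assert (E3 : dot (vsub u w) (vsub v w) = dot u v - dot u w - dot v w + dot w w) by (vunf; simpl; ring).
  rewrite E1, E2, E3, G1, G2, G3, G4, G5, G6. repeat split; field.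
Qed.

Definition Dt (u v : V3) := det3 u v (wv u v).

Lemma Dt_val : forall u v, gram u v -> Dt u v = kap * (3 / 4).
Proof.
  intros u v G. rewrite <- (cross_sq_gram u v G).
  assert (E : det3 u v (wv u v) = kap * dot (cross u v) (cross u v)) by (unfold wv, det3; vunf; simpl; field).
  unfold Dt. exact E.
Qed.

Lemma Dt_pos : forall u v, gram u v -> 0 < Dt u v.
Proof. intros. rewrite Dt_val; auto. pose proof kap_pos. lra. Qed.

Lemma decomp : forall n u v w, vscale (det3 u v w) n =
  vadd (vscale (dot n u) (cross v w)) (vadd (vscale (dot n v) (cross w u)) (vscale (dot n w) (cross u v))).
Proof. intros. veq. Qed.

Lemma n_zero : forall n u v, gram u v -> dot n u = 0 -> dot n v = 0 -> dot n (wv u v) = 0 -> n = vzero.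
Proof.
  intros n u v G H1 H2 H3. pose proof (decomp n u v (wv u v)) as E. rewrite H1, H2, H3 in E.
  fold (Dt u v) in E. pose proof (Dt_pos u v G).
  assert (vscale (/ Dt u v) (vscale (Dt u v) n) = n) by (apply V3_eq; vunf; simpl; field; lra).
  rewrite <- H0, E. apply V3_eq; vunf; simpl; ring.
Qed.

Lemma dot_phi : forall n O u v w i j k, dot n (phi O u v w i j k) = dot n O + i * dot n u + j * dot n v + k * dot n w.
Proof. intros. unfold phi. vunf. simpl. ring. Qed.

Lemma phi_cross : forall O u v w i1 j1 k1 i2 j2 k2 i3 j3 k3,
  cross (vsub (phi O u v w i2 j2 k2) (phi O u v w i1 j1 k1)) (vsub (phi O u v w i3 j3 k3) (phi O u v w i1 j1 k1)) =
  vadd (vscale ((i2 - i1) * (j3 - j1) - (j2 - j1) * (i3 - i1)) (cross u v))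
   (vadd (vscale ((i2 - i1) * (k3 - k1) - (k2 - k1) * (i3 - i1)) (cross u w))
         (vscale ((j2 - j1) * (k3 - k1) - (k2 - k1) * (j3 - j1)) (cross v w))).
Proof. intros. unfold phi. veq. Qed.

Lemma phi_cross0 : forall O u v w i1 j1 k1 i2 j2 k2 i3 j3 k3,
  (i2 - i1) * (j3 - j1) - (j2 - j1) * (i3 - i1) = 0 ->
  (i2 - i1) * (k3 - k1) - (k2 - k1) * (i3 - i1) = 0 ->
  (j2 - j1) * (k3 - k1) - (k2 - k1) * (j3 - j1) = 0 ->
  cross (vsub (phi O u v w i2 j2 k2) (phi O u v w i1 j1 k1)) (vsub (phi O u v w i3 j3 k3) (phi O u v w i1 j1 k1)) = vzero.
Proof. intros. rewrite phi_cross, H, H0, H1. veq. Qed.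

Definition posr (x : R) := if Rlt_dec 0 x then x else 1.
Lemma posr_pos : forall x, 0 < posr x.
Proof. intros; unfold posr; destruct Rlt_dec; lra. Qed.
Lemma posr_le : forall x, 0 < x -> posr x <= x.
Proof. intros; unfold posr; destruct Rlt_dec; lra. Qed.

Lemma perturb : forall a d b e c f pi pj pk di dj dk, X3 a d b e c f pi pj pk ->
  -1 <= di <= 1 -> -1 <= dj <= 1 -> -1 <= dk <= 1 -> -1 <= di + dj + dk <= 1 ->
  (pk = 0 -> 0 <= dk) -> (pi = IZR a -> 0 <= di) -> (pi = IZR d -> di <= 0) ->
  (pj = IZR b -> 0 <= dj) -> (pj = IZR e -> dj <= 0) ->
  (pi + pj + pk = IZR c -> 0 <= di + dj + dk) -> (pi + pj + pk = IZR f -> di + dj + dk <= 0) ->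
  exists eps, 0 < eps /\ X3 a d b e c f (pi + eps * di) (pj + eps * dj) (pk + eps * dk).
Proof.
  intros a d b e c f pi pj pk di dj dk (H1 & H2 & H3 & H4) D1 D2 D3 D4 T1 T2 T3 T4 T5 T6 T7.
  set (s1 := pk). set (s2 := pi - IZR a). set (s3 := IZR d - pi). set (s4 := pj - IZR b).
  set (s5 := IZR e - pj). set (s6 := pi + pj + pk - IZR c). set (s7 := IZR f - (pi + pj + pk)).
  set (m := Rmin (posr s1) (Rmin (posr s2) (Rmin (posr s3) (Rmin (posr s4) (Rmin (posr s5) (Rmin (posr s6) (posr s7))))))).
  assert (Hm : 0 < m) by (unfold m; repeat apply Rmin_glb_lt; apply posr_pos).
  assert (M1 : m <= posr s1) by (unfold m; apply Rmin_l).
  assert (M2 : m <= posr s2) by (unfold m; eapply Rle_trans; [apply Rmin_r|apply Rmin_l]).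
  assert (M3 : m <= posr s3) by (unfold m; do 2 (eapply Rle_trans; [apply Rmin_r|]); apply Rmin_l).
  assert (M4 : m <= posr s4) by (unfold m; do 3 (eapply Rle_trans; [apply Rmin_r|]); apply Rmin_l).
  assert (M5 : m <= posr s5) by (unfold m; do 4 (eapply Rle_trans; [apply Rmin_r|]); apply Rmin_l).
  assert (M6 : m <= posr s6) by (unfold m; do 5 (eapply Rle_trans; [apply Rmin_r|]); apply Rmin_l).
  assert (M7 : m <= posr s7) by (unfold m; do 6 (eapply Rle_trans; [apply Rmin_r|]); apply Rle_refl).
  exists (m / 2). split; [lra|].
  assert (B : forall s dd, 0 <= s -> -1 <= dd <= 1 -> m <= posr s -> (s = 0 -> 0 <= dd) -> 0 <= s + m / 2 * dd).
  { intros s dd Hs Hd Hms Hz. destruct (Rle_lt_or_eq_dec 0 s Hs) as [Hp|Hz0].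
    - pose proof (posr_le s Hp). nra.
    - rewrite <- Hz0 in *. specialize (Hz eq_refl). nra. }
  unfold X3. repeat split.
  - pose proof (B s1 dk ltac:(unfold s1; lra) D3 M1 ltac:(unfold s1; auto)). unfold s1, s2, s3, s4, s5, s6, s7 in *; lra.
  - pose proof (B s2 di ltac:(unfold s2; lra) D1 M2 ltac:(unfold s2; intros; apply T2; lra)). unfold s1, s2, s3, s4, s5, s6, s7 in *; lra.
  - pose proof (B s3 (- di) ltac:(unfold s3; lra) ltac:(lra) M3 ltac:(unfold s3; intros; assert (di <= 0) by (apply T3; lra); lra)). unfold s1, s2, s3, s4, s5, s6, s7 in *; lra.
  - pose proof (B s4 dj ltac:(unfold s4; lra) D2 M4 ltac:(unfold s4; intros; apply T4; lra)). unfold s1, s2, s3, s4, s5, s6, s7 in *; lra.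
  - pose proof (B s5 (- dj) ltac:(unfold s5; lra) ltac:(lra) M5 ltac:(unfold s5; intros; assert (dj <= 0) by (apply T5; lra); lra)). unfold s1, s2, s3, s4, s5, s6, s7 in *; lra.
  - pose proof (B s6 (di + dj + dk) ltac:(unfold s6; lra) D4 M6 ltac:(unfold s6; intros; apply T6; lra)). unfold s1, s2, s3, s4, s5, s6, s7 in *; lra.
  - pose proof (B s7 (- (di + dj + dk)) ltac:(unfold s7; lra) ltac:(lra) M7 ltac:(unfold s7; intros; assert (di + dj + dk <= 0) by (apply T7; lra); lra)). unfold s1, s2, s3, s4, s5, s6, s7 in *; lra.
Qed.

Definition faceR (O u v w : V3) (a d b e c f : Z) (g : R -> R -> R -> Prop) : region :=
  fun x => exists i j k, X3 a d b e c f i j k /\ g i j k /\ x = phi O u v w i j k.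

Lemma face_same : forall O u v w a d b e c f n c0 (g : R -> R -> R -> Prop),
  (forall i j k, X3 a d b e c f i j k ->
     (i * dot n u + j * dot n v + k * dot n w = c0 - dot n O <-> g i j k)) ->
  same_region (fun x => hull (Sl O u v w a d b e c f) x /\ dot n x = c0) (faceR O u v w a d b e c f g).
Proof.
  intros O u v w a d b e c f n c0 g H x. split.
  - intros [Hx Hd]. destruct (hull_S_X3 _ _ _ _ _ _ _ _ _ _ _ Hx) as (i & j & k & HX & ->).
    exists i, j, k. split; auto. split; auto. apply H; auto. rewrite dot_phi in Hd. lra.
  - intros (i & j & k & HX & Hg & ->). split; [apply X3_hull; auto|].
    apply H in Hg; auto. rewrite dot_phi. lra.
Qed.

Ltac m0 := apply phi_cross0.
Ltac keep_le0 := repeat match goal with H : ?T |- _ => match T with _ <= 0 => fail 1 | _ => clear H end end.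
Ltac clr := repeat match goal with H : _ |- _ => clear H end.

Lemma mKI : forall O u v w i1 j1 k1 i2 j2 k2 i3 j3 k3, k2 = k1 /\ k3 = k1 -> i2 = i1 /\ i3 = i1 ->
  cross (vsub (phi O u v w i2 j2 k2) (phi O u v w i1 j1 k1)) (vsub (phi O u v w i3 j3 k3) (phi O u v w i1 j1 k1)) = vzero.
Proof. intros O u v w i1 j1 k1 i2 j2 k2 i3 j3 k3 [-> ->] [-> ->]. m0; ring. Qed.
Lemma mKJ : forall O u v w i1 j1 k1 i2 j2 k2 i3 j3 k3, k2 = k1 /\ k3 = k1 -> j2 = j1 /\ j3 = j1 ->
  cross (vsub (phi O u v w i2 j2 k2) (phi O u v w i1 j1 k1)) (vsub (phi O u v w i3 j3 k3) (phi O u v w i1 j1 k1)) = vzero.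
Proof. intros O u v w i1 j1 k1 i2 j2 k2 i3 j3 k3 [-> ->] [-> ->]. m0; ring. Qed.
Lemma mIJ : forall O u v w i1 j1 k1 i2 j2 k2 i3 j3 k3, i2 = i1 /\ i3 = i1 -> j2 = j1 /\ j3 = j1 ->
  cross (vsub (phi O u v w i2 j2 k2) (phi O u v w i1 j1 k1)) (vsub (phi O u v w i3 j3 k3) (phi O u v w i1 j1 k1)) = vzero.
Proof. intros O u v w i1 j1 k1 i2 j2 k2 i3 j3 k3 [-> ->] [-> ->]. m0; ring. Qed.
Lemma mKS : forall O u v w i1 j1 k1 i2 j2 k2 i3 j3 k3, k2 = k1 /\ k3 = k1 ->
  i2 + j2 + k2 = i1 + j1 + k1 /\ i3 + j3 + k3 = i1 + j1 + k1 ->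
  cross (vsub (phi O u v w i2 j2 k2) (phi O u v w i1 j1 k1)) (vsub (phi O u v w i3 j3 k3) (phi O u v w i1 j1 k1)) = vzero.
Proof. intros O u v w i1 j1 k1 i2 j2 k2 i3 j3 k3 [-> ->] [A B].
  assert (j2 = j1 + i1 - i2) by lra. assert (j3 = j1 + i1 - i3) by lra. subst. m0; ring. Qed.
Lemma mIS : forall O u v w i1 j1 k1 i2 j2 k2 i3 j3 k3, i2 = i1 /\ i3 = i1 ->
  i2 + j2 + k2 = i1 + j1 + k1 /\ i3 + j3 + k3 = i1 + j1 + k1 ->
  cross (vsub (phi O u v w i2 j2 k2) (phi O u v w i1 j1 k1)) (vsub (phi O u v w i3 j3 k3) (phi O u v w i1 j1 k1)) = vzero.
Proof. intros O u v w i1 j1 k1 i2 j2 k2 i3 j3 k3 [-> ->] [A B].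
  assert (k2 = k1 + j1 - j2) by lra. assert (k3 = k1 + j1 - j3) by lra. subst. m0; ring. Qed.
Lemma mJS : forall O u v w i1 j1 k1 i2 j2 k2 i3 j3 k3, j2 = j1 /\ j3 = j1 ->
  i2 + j2 + k2 = i1 + j1 + k1 /\ i3 + j3 + k3 = i1 + j1 + k1 ->
  cross (vsub (phi O u v w i2 j2 k2) (phi O u v w i1 j1 k1)) (vsub (phi O u v w i3 j3 k3) (phi O u v w i1 j1 k1)) = vzero.
Proof. intros O u v w i1 j1 k1 i2 j2 k2 i3 j3 k3 [-> ->] [A B].
  assert (k2 = k1 + i1 - i2) by lra. assert (k3 = k1 + i1 - i3) by lra. subst. m0; ring. Qed.

Lemma classify : forall o u v a d b e c f, gram u v -> (a < d)%Z -> (b < e)%Z -> (c < f)%Z ->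
  forall n c0, n <> vzero ->
  (forall x, hull (Sl o u v (wv u v) a d b e c f) x -> dot n x <= c0) ->
  forall x1 x2 x3, hull (Sl o u v (wv u v) a d b e c f) x1 -> dot n x1 = c0 ->
  hull (Sl o u v (wv u v) a d b e c f) x2 -> dot n x2 = c0 ->
  hull (Sl o u v (wv u v) a d b e c f) x3 -> dot n x3 = c0 ->
  cross (vsub x2 x1) (vsub x3 x1) <> vzero ->
  let F := fun x => hull (Sl o u v (wv u v) a d b e c f) x /\ dot n x = c0 in
  let FR := faceR o u v (wv u v) a d b e c f in
  same_region F (FR (fun i j k => k = 0)) \/
  same_region F (FR (fun i j k => i = IZR a)) \/ same_region F (FR (fun i j k => i = IZR d)) \/
  same_region F (FR (fun i j k => j = IZR b)) \/ same_region F (FR (fun i j k => j = IZR e)) \/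
  same_region F (FR (fun i j k => i + j + k = IZR c)) \/ same_region F (FR (fun i j k => i + j + k = IZR f)).
Proof.
  intros o u v a d b e c f G Had Hbe Hcf n c0 Hn Hle x1 x2 x3 H1 E1 H2 E2 H3 E3 Hc F FR.
  set (w := wv u v) in *.
  set (al := dot n u). set (be := dot n v). set (ga := dot n w). set (c' := c0 - dot n o).
  assert (HL : forall i j k, X3 a d b e c f i j k -> al * i + be * j + ga * k <= c').
  { intros i j k HX. pose proof (Hle _ (X3_hull o u v w a d b e c f i j k HX)) as Hd.
    rewrite dot_phi in Hd. unfold al, be, ga, c'. lra. }
  destruct (hull_S_X3 _ _ _ _ _ _ _ _ _ _ _ H1) as (i1 & j1 & k1 & X1 & ->).
  destruct (hull_S_X3 _ _ _ _ _ _ _ _ _ _ _ H2) as (i2 & j2 & k2 & X2 & ->).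
  destruct (hull_S_X3 _ _ _ _ _ _ _ _ _ _ _ H3) as (i3 & j3 & k3 & X3' & ->).
  rewrite dot_phi in E1, E2, E3.
  assert (L1 : al * i1 + be * j1 + ga * k1 = c') by (unfold al, be, ga, c'; lra).
  assert (L2 : al * i2 + be * j2 + ga * k2 = c') by (unfold al, be, ga, c'; lra).
  assert (L3 : al * i3 + be * j3 + ga * k3 = c') by (unfold al, be, ga, c'; lra).
  set (pi := (i1 + i2 + i3) / 3). set (pj := (j1 + j2 + j3) / 3). set (pk := (k1 + k2 + k3) / 3).
  assert (XP : X3 a d b e c f pi pj pk).
  { destruct X1 as (? & ? & ? & ?), X2 as (? & ? & ? & ?), X3' as (? & ? & ? & ?).
    unfold X3, pi, pj, pk. repeat split; lra. }
  assert (LP : al * pi + be * pj + ga * pk = c').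
  { unfold pi, pj, pk. replace (al * ((i1 + i2 + i3) / 3) + be * ((j1 + j2 + j3) / 3) + ga * ((k1 + k2 + k3) / 3))
      with ((al * i1 + be * j1 + ga * k1 + (al * i2 + be * j2 + ga * k2) + (al * i3 + be * j3 + ga * k3)) / 3) by field.
    rewrite L1, L2, L3. field. }
  assert (Hdir : forall di dj dk, -1 <= di <= 1 -> -1 <= dj <= 1 -> -1 <= dk <= 1 -> -1 <= di + dj + dk <= 1 ->
    (pk = 0 -> 0 <= dk) -> (pi = IZR a -> 0 <= di) -> (pi = IZR d -> di <= 0) ->
    (pj = IZR b -> 0 <= dj) -> (pj = IZR e -> dj <= 0) ->
    (pi + pj + pk = IZR c -> 0 <= di + dj + dk) -> (pi + pj + pk = IZR f -> di + dj + dk <= 0) ->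
    al * di + be * dj + ga * dk <= 0).
  { intros di dj dk R1 R2 R3 R4 T1 T2 T3 T4 T5 T6 T7.
    destruct (perturb a d b e c f pi pj pk di dj dk XP R1 R2 R3 R4 T1 T2 T3 T4 T5 T6 T7) as (eps & He & HX).
    specialize (HL _ _ _ HX).
    replace (al * (pi + eps * di) + be * (pj + eps * dj) + ga * (pk + eps * dk))
      with (al * pi + be * pj + ga * pk + eps * (al * di + be * dj + ga * dk)) in HL by ring.
    rewrite LP in HL. destruct (Rle_dec (al * di + be * dj + ga * dk) 0) as [?|Hn']; auto.
    exfalso. assert (0 < eps * (al * di + be * dj + ga * dk)) by (apply Rmult_lt_0_compat; lra). lra. }
  assert (Hnz : ~ (al = 0 /\ be = 0 /\ ga = 0)).
  { intros (A & B & C). apply Hn. apply (n_zero n u v G); auto. }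
  destruct X1 as (K1 & I1 & J1 & S1), X2 as (K2 & I2 & J2 & S2), X3' as (K3 & I3 & J3 & S3).
  assert (CK : pk = 0 -> k2 = k1 /\ k3 = k1) by (unfold pk; clear - K1 K2 K3; intros; lra).
  assert (CI : pi = IZR a \/ pi = IZR d -> i2 = i1 /\ i3 = i1) by (unfold pi; clear - I1 I2 I3; intros [?|?]; lra).
  assert (CJ : pj = IZR b \/ pj = IZR e -> j2 = j1 /\ j3 = j1) by (unfold pj; clear - J1 J2 J3; intros [?|?]; lra).
  assert (CS : pi + pj + pk = IZR c \/ pi + pj + pk = IZR f ->
     i2 + j2 + k2 = i1 + j1 + k1 /\ i3 + j3 + k3 = i1 + j1 + k1) by (unfold pi, pj, pk; clear - S1 S2 S3; intros [?|?]; lra).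
  assert (KI : ~ (pk = 0 /\ (pi = IZR a \/ pi = IZR d))).
  { intros [A B]. destruct (CK A), (CI B). apply Hc. apply mKI; auto. }
  assert (KJ : ~ (pk = 0 /\ (pj = IZR b \/ pj = IZR e))).
  { intros [A B]. destruct (CK A), (CJ B). apply Hc. apply mKJ; auto. }
  assert (KS : ~ (pk = 0 /\ (pi + pj + pk = IZR c \/ pi + pj + pk = IZR f))).
  { intros [A B]. destruct (CK A), (CS B). apply Hc. apply mKS; auto. }
  assert (IJ : ~ ((pi = IZR a \/ pi = IZR d) /\ (pj = IZR b \/ pj = IZR e))).
  { intros [A B]. destruct (CI A), (CJ B). apply Hc. apply mIJ; auto. }
  assert (IS : ~ ((pi = IZR a \/ pi = IZR d) /\ (pi + pj + pk = IZR c \/ pi + pj + pk = IZR f))).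
  { intros [A B]. destruct (CI A), (CS B). apply Hc. apply mIS; auto. }
  assert (JS : ~ ((pj = IZR b \/ pj = IZR e) /\ (pi + pj + pk = IZR c \/ pi + pj + pk = IZR f))).
  { intros [A B]. destruct (CJ A), (CS B). apply Hc. apply mJS; auto. }
  clearbody pi pj pk. clear CK CI CJ CS K1 K2 K3 I1 I2 I3 J1 J2 J3 S1 S2 S3 L1 L2 L3 E1 E2 E3 H1 H2 H3 Hc HL Hle.
  clear i1 j1 k1 i2 j2 k2 i3 j3 k3.
  apply IZR_lt in Had. apply IZR_lt in Hbe. apply IZR_lt in Hcf.
  Ltac dd Hdir x y z := let h := fresh "Dd" in
    pose proof (Hdir x y z ltac:(lra) ltac:(lra) ltac:(lra) ltac:(lra)
      ltac:(intros; first [contradiction | (clr; lra)]) ltac:(intros; first [contradiction | (clr; lra)])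
      ltac:(intros; first [contradiction | (clr; lra)]) ltac:(intros; first [contradiction | (clr; lra)])
      ltac:(intros; first [contradiction | (clr; lra)]) ltac:(intros; first [contradiction | (clr; lra)])
      ltac:(intros; first [contradiction | (clr; lra)])) as h; ring_simplify in h.
  destruct (Req_EM_T pk 0) as [TK|NK].
  {
    assert (NIa : pi <> IZR a) by (intro; apply KI; auto). assert (NId : pi <> IZR d) by (intro; apply KI; auto).
    assert (NJb : pj <> IZR b) by (intro; apply KJ; auto). assert (NJe : pj <> IZR e) by (intro; apply KJ; auto).
    assert (NSc : pi + pj + pk <> IZR c) by (intro; apply KS; auto). assert (NSf : pi + pj + pk <> IZR f) by (intro; apply KS; auto).
    dd Hdir 1 0 0. dd Hdir (-1) 0 0. dd Hdir 0 1 0. dd Hdir 0 (-1) 0. dd Hdir 0 0 1.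
    assert (A0 : al = 0) by (keep_le0; lra). assert (B0 : be = 0) by (keep_le0; lra).
    assert (ga <> 0) by (intro; apply Hnz; auto).
    left. apply face_same. intros i j k HX. fold w al be ga. fold c'. rewrite <- LP, TK.
    rewrite A0, B0. split; intros Hk.
    - ring_simplify in Hk. apply Rmult_integral in Hk. destruct Hk as [Hk|Hk]; first [contradiction | exact Hk].
    - rewrite Hk. ring. }
  destruct (Req_EM_T pi (IZR a)) as [TIa|NIa].
  { assert (NJb : pj <> IZR b) by (intro; apply IJ; auto). assert (NJe : pj <> IZR e) by (intro; apply IJ; auto).
    assert (NSc : pi + pj + pk <> IZR c) by (intro; apply IS; auto). assert (NSf : pi + pj + pk <> IZR f) by (intro; apply IS; auto).
    assert (NId : pi <> IZR d) by (intro HH; clear - TIa HH Had; lra).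
    dd Hdir 1 0 0. dd Hdir 0 1 0. dd Hdir 0 (-1) 0. dd Hdir 0 0 1. dd Hdir 0 0 (-1).
    assert (B0 : be = 0) by (keep_le0; lra). assert (C0 : ga = 0) by (keep_le0; lra).
    assert (al <> 0) by (intro; apply Hnz; auto).
    right; left. apply face_same. intros i j k HX. fold w al be ga. fold c'. rewrite <- LP, TIa.
    rewrite B0, C0. split; intros Hk.
    - apply Rmult_eq_reg_l with al; auto. clear - Hk; lra.
    - rewrite Hk. ring. }
  destruct (Req_EM_T pi (IZR d)) as [TId|NId].
  { assert (NJb : pj <> IZR b) by (intro; apply IJ; auto). assert (NJe : pj <> IZR e) by (intro; apply IJ; auto).
    assert (NSc : pi + pj + pk <> IZR c) by (intro; apply IS; auto). assert (NSf : pi + pj + pk <> IZR f) by (intro; apply IS; auto).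
    dd Hdir (-1) 0 0. dd Hdir 0 1 0. dd Hdir 0 (-1) 0. dd Hdir 0 0 1. dd Hdir 0 0 (-1).
    assert (B0 : be = 0) by (keep_le0; lra). assert (C0 : ga = 0) by (keep_le0; lra).
    assert (al <> 0) by (intro; apply Hnz; auto).
    right; right; left. apply face_same. intros i j k HX. fold w al be ga. fold c'. rewrite <- LP, TId.
    rewrite B0, C0. split; intros Hk.
    - apply Rmult_eq_reg_l with al; auto. clear - Hk; lra.
    - rewrite Hk. ring. }
  destruct (Req_EM_T pj (IZR b)) as [TJb|NJb].
  { assert (NSc : pi + pj + pk <> IZR c) by (intro; apply JS; auto). assert (NSf : pi + pj + pk <> IZR f) by (intro; apply JS; auto).
    assert (NJe : pj <> IZR e) by (intro HH; clear - TJb HH Hbe; lra).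
    dd Hdir 1 0 0. dd Hdir (-1) 0 0. dd Hdir 0 1 0. dd Hdir 0 0 1. dd Hdir 0 0 (-1).
    assert (A0 : al = 0) by (keep_le0; lra). assert (C0 : ga = 0) by (keep_le0; lra).
    assert (be <> 0) by (intro; apply Hnz; auto).
    right; right; right; left. apply face_same. intros i j k HX. fold w al be ga. fold c'. rewrite <- LP, TJb.
    rewrite A0, C0. split; intros Hk.
    - apply Rmult_eq_reg_l with be; auto. clear - Hk; lra.
    - rewrite Hk. ring. }
  destruct (Req_EM_T pj (IZR e)) as [TJe|NJe].
  { assert (NSc : pi + pj + pk <> IZR c) by (intro; apply JS; auto). assert (NSf : pi + pj + pk <> IZR f) by (intro; apply JS; auto).
    dd Hdir 1 0 0. dd Hdir (-1) 0 0. dd Hdir 0 (-1) 0. dd Hdir 0 0 1. dd Hdir 0 0 (-1).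
    assert (A0 : al = 0) by (keep_le0; lra). assert (C0 : ga = 0) by (keep_le0; lra).
    assert (be <> 0) by (intro; apply Hnz; auto).
    do 4 right; left. apply face_same. intros i j k HX. fold w al be ga. fold c'. rewrite <- LP, TJe.
    rewrite A0, C0. split; intros Hk.
    - apply Rmult_eq_reg_l with be; auto. clear - Hk; lra.
    - rewrite Hk. ring. }
  destruct (Req_EM_T (pi + pj + pk) (IZR c)) as [TSc|NSc].
  { assert (NSf : pi + pj + pk <> IZR f) by (intro HH; clear - TSc HH Hcf; lra).
    dd Hdir 1 (-1) 0. dd Hdir (-1) 1 0. dd Hdir 0 1 (-1). dd Hdir 0 (-1) 1. dd Hdir 1 0 0.
    assert (B1 : be = al) by (keep_le0; lra). assert (C1 : ga = al) by (keep_le0; lra).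
    assert (al <> 0) by (intro Z; apply Hnz; split; [exact Z|split]; [rewrite B1; exact Z| rewrite C1; exact Z]).
    do 5 right; left. apply face_same. intros i j k HX. fold w al be ga. fold c'. rewrite <- LP.
    rewrite B1, C1. split; intros Hk.
    - apply Rmult_eq_reg_l with al; auto. rewrite <- TSc. clear - Hk; lra.
    - rewrite <- TSc in Hk. transitivity (al * (i + j + k)); [ring|]. rewrite Hk. ring. }
  destruct (Req_EM_T (pi + pj + pk) (IZR f)) as [TSf|NSf].
  { dd Hdir 1 (-1) 0. dd Hdir (-1) 1 0. dd Hdir 0 1 (-1). dd Hdir 0 (-1) 1. dd Hdir (-1) 0 0.
    assert (B1 : be = al) by (keep_le0; lra). assert (C1 : ga = al) by (keep_le0; lra).
    assert (al <> 0) by (intro Z; apply Hnz; split; [exact Z|split]; [rewrite B1; exact Z| rewrite C1; exact Z]).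
    do 6 right. apply face_same. intros i j k HX. fold w al be ga. fold c'. rewrite <- LP.
    rewrite B1, C1. split; intros Hk.
    - apply Rmult_eq_reg_l with al; auto. rewrite <- TSf. clear - Hk; lra.
    - rewrite <- TSf in Hk. transitivity (al * (i + j + k)); [ring|]. rewrite Hk. ring. }
  exfalso.
  dd Hdir 1 0 0. dd Hdir (-1) 0 0. dd Hdir 0 1 0. dd Hdir 0 (-1) 0. dd Hdir 0 0 1. dd Hdir 0 0 (-1).
  apply Hnz. keep_le0. repeat split; lra.
Qed.

Lemma same_trans : forall A B C : region, same_region A B -> same_region B C -> same_region A C.
Proof. intros A B C H1 H2 x. specialize (H1 x). specialize (H2 x). tauto. Qed.
Lemma same_sym : forall A B : region, same_region A B -> same_region B A.
Proof. intros A B H x. symmetry. apply H. Qed.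

Lemma cp_same : forall A B, same_region A B -> convex_polyiamond B -> convex_polyiamond A.
Proof.
  intros A B H (Hc & o & u & v & T & G1 & G2 & G3 & HT & HB). split.
  - intros x y t Hx Hy Ht. apply H. apply Hc; auto; apply H; auto.
  - exists o, u, v, T. do 4 (split; [auto|]). eapply same_trans; eauto.
Qed.

Lemma face_poly : forall (F G : region) o u v L1 U1 L2 U2 L3 U3, gram u v ->
  same_region F G -> same_region G (region2 o u v L1 U1 L2 U2 L3 U3) ->
  forall x1 x2 x3, F x1 -> F x2 -> F x3 -> cross (vsub x2 x1) (vsub x3 x1) <> vzero ->
  convex_polyiamond F.
Proof.
  intros F G o u v L1 U1 L2 U2 L3 U3 Hg H1 H2 x1 x2 x3 F1 F2 F3 Hc.
  assert (E := same_trans _ _ _ H1 H2).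
  apply (cp_same F (region2 o u v L1 U1 L2 U2 L3 U3) E).
  apply (poly2 o u v L1 U1 L2 U2 L3 U3 Hg x1 x2 x3); try apply E; auto.
Qed.

Ltac Rz := rewrite ?minus_IZR, ?plus_IZR in *.

Lemma face1 : forall o u v w a d b e c f,
  same_region (faceR o u v w a d b e c f (fun i j k => k = 0)) (region2 o u v a d b e c f).
Proof.
  intros o u v w a d b e c f x. split.
  - intros (i & j & k & (K & I & J & S) & Hk & ->). subst k. exists i, j. split; [unfold phi, pt; veq|].
    repeat split; lra.
  - intros (X & Y & -> & B1 & B2 & B3). exists X, Y, 0. split; [unfold X3; repeat split; lra|].
    split; auto. unfold phi, pt; veq.
Qed.

Lemma face2 : forall o u v w a d b e c f, (a <= d)%Z ->
  same_region (faceR o u v w a d b e c f (fun i j k => i = IZR a))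
    (region2 (vadd o (vscale (IZR a) u)) v w b e 0 (f - a - b) (c - a) (f - a)).
Proof.
  intros o u v w a d b e c f Had x. apply IZR_le in Had. split.
  - intros (i & j & k & (K & I & J & S) & Hk & ->). subst i. exists j, k. split; [unfold phi, pt; veq|].
    Rz. repeat split; lra.
  - intros (X & Y & -> & B1 & B2 & B3). Rz. exists (IZR a), X, Y. split; [unfold X3; repeat split; lra|].
    split; auto. unfold phi, pt; veq.
Qed.

Lemma face3 : forall o u v w a d b e c f, (a <= d)%Z ->
  same_region (faceR o u v w a d b e c f (fun i j k => i = IZR d))
    (region2 (vadd o (vscale (IZR d) u)) v w b e 0 (f - d - b) (c - d) (f - d)).
Proof.
  intros o u v w a d b e c f Had x. apply IZR_le in Had. split.
  - intros (i & j & k & (K & I & J & S) & Hk & ->). subst i. exists j, k. split; [unfold phi, pt; veq|].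
    Rz. repeat split; lra.
  - intros (X & Y & -> & B1 & B2 & B3). Rz. exists (IZR d), X, Y. split; [unfold X3; repeat split; lra|].
    split; auto. unfold phi, pt; veq.
Qed.

Lemma face4 : forall o u v w a d b e c f, (b <= e)%Z ->
  same_region (faceR o u v w a d b e c f (fun i j k => j = IZR b))
    (region2 (vadd o (vscale (IZR b) v)) u w a d 0 (f - a - b) (c - b) (f - b)).
Proof.
  intros o u v w a d b e c f Hbe x. apply IZR_le in Hbe. split.
  - intros (i & j & k & (K & I & J & S) & Hk & ->). subst j. exists i, k. split; [unfold phi, pt; veq|].
    Rz. repeat split; lra.
  - intros (X & Y & -> & B1 & B2 & B3). Rz. exists X, (IZR b), Y. split; [unfold X3; repeat split; lra|].
    split; auto. unfold phi, pt; veq.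
Qed.

Lemma face5 : forall o u v w a d b e c f, (b <= e)%Z ->
  same_region (faceR o u v w a d b e c f (fun i j k => j = IZR e))
    (region2 (vadd o (vscale (IZR e) v)) u w a d 0 (f - a - e) (c - e) (f - e)).
Proof.
  intros o u v w a d b e c f Hbe x. apply IZR_le in Hbe. split.
  - intros (i & j & k & (K & I & J & S) & Hk & ->). subst j. exists i, k. split; [unfold phi, pt; veq|].
    Rz. repeat split; lra.
  - intros (X & Y & -> & B1 & B2 & B3). Rz. exists X, (IZR e), Y. split; [unfold X3; repeat split; lra|].
    split; auto. unfold phi, pt; veq.
Qed.

Lemma face6 : forall o u v w a d b e c f, (c <= f)%Z ->
  same_region (faceR o u v w a d b e c f (fun i j k => i + j + k = IZR c))
    (region2 (vadd o (vscale (IZR c) w)) (vsub u w) (vsub v w) a d b e (a + b) c).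
Proof.
  intros o u v w a d b e c f Hcf x. apply IZR_le in Hcf. split.
  - intros (i & j & k & (K & I & J & S) & Hk & ->). exists i, j. split.
    + replace k with (IZR c - i - j) by lra. unfold phi, pt; veq.
    + Rz. repeat split; lra.
  - intros (X & Y & -> & B1 & B2 & B3). Rz. exists X, Y, (IZR c - X - Y). split; [unfold X3; repeat split; lra|].
    split; [ring|]. unfold phi, pt; veq.
Qed.

Lemma face7 : forall o u v w a d b e c f, (c <= f)%Z ->
  same_region (faceR o u v w a d b e c f (fun i j k => i + j + k = IZR f))
    (region2 (vadd o (vscale (IZR f) w)) (vsub u w) (vsub v w) a d b e (a + b) f).
Proof.
  intros o u v w a d b e c f Hcf x. apply IZR_le in Hcf. split.
  - intros (i & j & k & (K & I & J & S) & Hk & ->). exists i, j. split.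
    + replace k with (IZR f - i - j) by lra. unfold phi, pt; veq.
    + Rz. repeat split; lra.
  - intros (X & Y & -> & B1 & B2 & B3). Rz. exists X, Y, (IZR f - X - Y). split; [unfold X3; repeat split; lra|].
    split; [ring|]. unfold phi, pt; veq.
Qed.

Lemma all_faces : forall o u v a d b e c f, gram u v -> (a < d)%Z -> (b < e)%Z -> (c < f)%Z ->
  forall F, is_face (hull (Sl o u v (wv u v) a d b e c f)) F -> convex_polyiamond F.
Proof.
  intros o u v a d b e c f G Had Hbe Hcf F (n & c0 & Hn & Hle & HF & x1 & x2 & x3 & F1 & F2 & F3 & Hc).
  destruct (w_gram u v G) as [Guw Gvw].
  assert (Gd := gram_diff u v (wv u v) G Guw Gvw).
  pose proof (HF x1) as A1. pose proof (HF x2) as A2. pose proof (HF x3) as A3.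
  destruct (proj1 A1 F1) as [H1 E1]. destruct (proj1 A2 F2) as [H2 E2]. destruct (proj1 A3 F3) as [H3 E3].
  destruct (classify o u v a d b e c f G Had Hbe Hcf n c0 Hn Hle x1 x2 x3 H1 E1 H2 E2 H3 E3 Hc)
    as [C|[C|[C|[C|[C|[C|C]]]]]].
  - apply (face_poly F _ _ _ _ _ _ _ _ _ _ G (same_trans _ _ _ HF C) (face1 o u v (wv u v) a d b e c f) x1 x2 x3 F1 F2 F3 Hc).
  - apply (face_poly F _ _ _ _ _ _ _ _ _ _ Gvw (same_trans _ _ _ HF C) (face2 o u v (wv u v) a d b e c f (Z.lt_le_incl _ _ Had)) x1 x2 x3 F1 F2 F3 Hc).
  - apply (face_poly F _ _ _ _ _ _ _ _ _ _ Gvw (same_trans _ _ _ HF C) (face3 o u v (wv u v) a d b e c f (Z.lt_le_incl _ _ Had)) x1 x2 x3 F1 F2 F3 Hc).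
  - apply (face_poly F _ _ _ _ _ _ _ _ _ _ Guw (same_trans _ _ _ HF C) (face4 o u v (wv u v) a d b e c f (Z.lt_le_incl _ _ Hbe)) x1 x2 x3 F1 F2 F3 Hc).
  - apply (face_poly F _ _ _ _ _ _ _ _ _ _ Guw (same_trans _ _ _ HF C) (face5 o u v (wv u v) a d b e c f (Z.lt_le_incl _ _ Hbe)) x1 x2 x3 F1 F2 F3 Hc).
  - apply (face_poly F _ _ _ _ _ _ _ _ _ _ Gd (same_trans _ _ _ HF C) (face6 o u v (wv u v) a d b e c f (Z.lt_le_incl _ _ Hcf)) x1 x2 x3 F1 F2 F3 Hc).
  - apply (face_poly F _ _ _ _ _ _ _ _ _ _ Gd (same_trans _ _ _ HF C) (face7 o u v (wv u v) a d b e c f (Z.lt_le_incl _ _ Hcf)) x1 x2 x3 F1 F2 F3 Hc).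
Qed.

Lemma scale_cross_nz : forall u v s, gram u v -> s <> 0 -> vscale s (cross u v) <> vzero.
Proof.
  intros u v s G Hs E. pose proof (cross_sq_gram u v G) as C.
  assert (dot (vscale s (cross u v)) (vscale s (cross u v)) = s * s * dot (cross u v) (cross u v)) by (vunf; simpl; ring).
  rewrite E in H. rewrite C in H. assert (dot vzero vzero = 0) by (vunf; simpl; ring). rewrite H0 in H.
  assert (s * s = 0) by lra. apply Rmult_integral in H1. tauto.
Qed.

Lemma in_S : forall O u v w a d b e c f i j k, X3 a d b e c f (IZR i) (IZR j) (IZR k) ->
  In (gZ O u v w (i, j, k)) (Sl O u v w a d b e c f).
Proof. intros. unfold Sl. apply in_map. apply Lint_in; auto. Qed.

Theorem lemma13_main : forall P : region, convex_polyiamond P -> can_be_domed P.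
Proof.
  intros P (Hconv & o & u & v & T & G1 & G2 & G3 & HT & HP).
  assert (G : gram u v) by (repeat split; auto).
  assert (H : PIa P o u v T) by (split; [|split; [|split]]; auto).
  set (a := bmin fI T). set (d := bmax fI T). set (b := bmin fJ T). set (e := bmax fJ T).
  set (c := bmin fS T). set (f := bmax fS T).
  assert (exists t, In t T) as [t Ht] by (destruct T as [|t0 T0]; [congruence| exists t0; simpl; auto]).
  pose proof (PI_cellok P o u v T H t Ht) as Hok. fold a d b e c f in Hok.
  assert (Had : (a < d)%Z) by (destruct t; simpl in Hok; lia).
  assert (Hbe : (b < e)%Z) by (destruct t; simpl in Hok; lia).
  assert (Hcf : (c < f)%Z) by (destruct t; simpl in Hok; lia).
  set (w := wv u v).
  pose proof (Dt_pos u v G) as DP. unfold Dt in DP. fold w in DP.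
  exists (Sl o u v w a d b e c f). split; [|split].
  -
    destruct t as [i j|i j]; simpl in Hok.
    + exists (gZ o u v w (i, j, 0%Z)), (gZ o u v w ((i + 1)%Z, j, 0%Z)), (gZ o u v w (i, (j + 1)%Z, 0%Z)),
        (gZ o u v w (i, j, 1%Z)).
      destruct Hok as (O1 & O2 & O3 & O4 & O5 & O6). toR O1. toR O2. toR O3. toR O4. toR O5. toR O6.
      repeat split; try (apply in_S; unfold X3; rewrite ?plus_IZR; simpl; lra).
      unfold gZ, phi. rewrite !plus_IZR.
      replace (det3 _ _ _) with (det3 u v w) by (vunf; simpl; ring). lra.
    + exists (gZ o u v w ((i + 1)%Z, j, 0%Z)), (gZ o u v w (i, (j + 1)%Z, 0%Z)), (gZ o u v w ((i + 1)%Z, (j + 1)%Z, 0%Z)),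
        (gZ o u v w ((i + 1)%Z, j, 1%Z)).
      destruct Hok as (O1 & O2 & O3 & O4 & O5 & O6). toR O1. toR O2. toR O3. toR O4. toR O5. toR O6.
      repeat split; try (apply in_S; unfold X3; rewrite ?plus_IZR; simpl; lra).
      unfold gZ, phi. rewrite !plus_IZR.
      replace (det3 _ _ _) with (- det3 u v w) by (vunf; simpl; ring). lra.
  -
    set (n := vscale (-1) (cross u v)).
    assert (Nu : dot n u = 0) by (unfold n; vunf; simpl; ring).
    assert (Nv : dot n v = 0) by (unfold n; vunf; simpl; ring).
    assert (Nw : dot n w = - det3 u v w) by (unfold n; vunf; simpl; ring).
    exists n, (dot n o). split; [|split; [|split]].
    + apply scale_cross_nz; auto. lra.
    + intros x Hx. destruct (hull_S_X3 _ _ _ _ _ _ _ _ _ _ _ Hx) as (i & j & k & (K & _) & ->).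
      rewrite dot_phi, Nu, Nv, Nw. assert (0 <= k * det3 u v w) by (apply Rmult_le_pos; lra). lra.
    + eapply same_trans; [apply (PI_eq P o u v T H)|]. fold a d b e c f.
      eapply same_trans; [apply same_sym; apply (face1 o u v w a d b e c f)|].
      apply same_sym. apply face_same. intros i j k HX. rewrite Nu, Nv, Nw. split.
      * intros Hk. assert (k * det3 u v w = 0) by lra. apply Rmult_integral in H0. destruct H0; lra.
      * intros ->. ring.
    + destruct t as [i j|i j]; simpl in Hok.
      * exists (pt o u v (IZR i) (IZR j)), (pt o u v (IZR (i + 1)) (IZR j)), (pt o u v (IZR i) (IZR (j + 1))).
        repeat split; try (apply (PI_verts P o u v T H (Up i j) (_, _) Ht); simpl; auto).
        rewrite pt_cross, !plus_IZR. apply scale_cross_nz; auto. intro Z; ring_simplify in Z; lra.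
      * exists (pt o u v (IZR (i + 1)) (IZR j)), (pt o u v (IZR i) (IZR (j + 1))), (pt o u v (IZR (i + 1)) (IZR (j + 1))).
        repeat split; try (apply (PI_verts P o u v T H (Down i j) (_, _) Ht); simpl; auto).
        rewrite pt_cross, !plus_IZR. apply scale_cross_nz; auto. intro Z; ring_simplify in Z; lra.
  - intros F HF _. apply (all_faces o u v a d b e c f G Had Hbe Hcf F HF).
Qed.


Theorem lemma13 : forall P : region, convex_polyiamond P -> can_be_domed P.
Proof. exact lemma13_main. Qed.
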